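(* Assume the regularity estimate $t\|u'(t)\|+t^2\|u''(t)\|+t^3\|u'''(t)\|\le Ct^\sigma$ ($t>0$) holds for some $\sigma>0$, and the time mesh is $t_n=(n\tau)^\gamma$ with $\gamma\ge1$. Then for $1\le n\le N$, with $\delta=\sigma-2/\gamma$, \[ \|\psi^n\|\le\|\psi\|_{I_n}\le C\times\begin{cases}\tau^2\log(t_n/t_1),&\text{if }\gamma=2/\sigma,\\ \tau^{\min(\gamma\sigma,2)}t_n^{\max(0,\delta)},&\text{if }\gamma\ne2/\sigma,\end{cases} \] where $\|\psi\|_{I_n}=\sup_{t\in I_n}\|\psi(t)\|$.
   Context: $\Omega\subset\mathbb{R}^d$ ($d\le3$) convex polyhedron, $0<\alpha<1$, $\kappa\in W^{1,\infty}(\Omega)$, $\kappa\ge\kappa_{\min}>0$, $\mathcal{A}w=-\nabla\cdot(\kappa\nabla w)$; $u$ solves $\partial_t^\alpha u+\mathcal{A}u=f$ on $\Omega\times(0,T]$ with $u=0$ on $\partial\Omega$, $u(0)=u_0$ (Caputo derivative $\partial_t^\alpha v(t)=\int_0^t\frac{(t-s)^{-\alpha}}{\Gamma(1-\alpha)}v'(s)\,ds$). $\|\cdot\|$ is the $L^2(\Omega)$ norm. Time mesh $t_n=(n\tau)^\gamma$, $0\le n\le N$, $\tau=T^{1/\gamma}/N$, $\tau_n=t_n-t_{n-1}$, $I_n=(t_{n-1},t_n)$. $\widehat u$ is continuous on $[0,T]$, linear on each $\overline{I_n}$, $\widehat u(0)=u_0$, $\int_{I_n}\widehat u\,dt=\int_{I_n}u\,dt$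 for $1\le n\le N$; $\psi=u-\widehat u$, $\psi^n=\psi(t_n)$. $C$ is a generic constant, bounded for $0<\alpha\le1$, independent of $N,\tau$. *)

(* Defs.v *)
From Stdlib Require Import Reals.
From Coquelicot Require Import Coquelicot.
Open Scope R_scope.

(* Graded mesh t_n = (n tau)^gamma, tau = T^(1/gamma)/N; t_0 = 0
   (handled separately since Stdlib's Rpower 0 g = 1). *)
Definition mesh_tau (T gamma : R) (N : nat) : R := Rpower T (/ gamma) / INR N.

Definition mesh (T gamma : R) (N : nat) (n : nat) : R :=
  match n with
  | O => 0
  | S _ => Rpower (INR n * mesh_tau T gamma N) gamma
  end.

Definition sup_norm_on {V : NormedModule R_AbsRing} (f : R -> V) (a b : R) : Rbar :=
  Lub_Rbar (fun r => exists t, a < t < b /\ r = norm (f t)).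

Definition rate (T sigma gamma : R) (N n : nat) : R :=
  let tau := mesh_tau T gamma N in
  let tn := mesh T gamma N n in
  let t1 := mesh T gamma N 1 in
  if Req_EM_T gamma (2 / sigma) then tau ^ 2 * (1 + ln (tn / t1))
  else Rpower tau (Rmin (gamma * sigma) 2) * Rpower tn (Rmax 0 (sigma - 2 / gamma)).

(* Main.v *)
Require Import Defs.
From Stdlib Require Import Reals Lra Lia.
From Coquelicot Require Import Coquelicot.
Open Scope R_scope.

Lemma norm_tri3 {V : NormedModule R_AbsRing} (a b c : V) :
  norm (minus a c) <= norm (minus a b) + norm (minus b c).
Proof. rewrite (minus_trans b). apply norm_triangle. Qed.

Lemma cont_eps {V : NormedModule R_AbsRing} (f : R -> V) s :
  continuous f s -> forall e, 0 < e -> exists d, 0 < d /\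
    forall w, Rabs (w - s) < d -> norm (minus (f w) (f s)) < e.
Proof.
  intros Hc e He.
  assert (Hnf := @norm_factor_gt_0 R_AbsRing V).
  assert (He' : 0 < e / @norm_factor R_AbsRing V) by (apply Rdiv_lt_0_compat; lra).
  destruct (proj1 (filterlim_locally f (f s)) Hc (mkposreal _ He')) as [d Hd].
  exists (pos d). split. apply cond_pos. intros w Hw.
  specialize (Hd w Hw). apply norm_compat2 in Hd. simpl in Hd.
  replace e with (@norm_factor R_AbsRing V * (e / @norm_factor R_AbsRing V)). exact Hd.
  field. lra.
Qed.

Lemma deriv_eps {V : NormedModule R_AbsRing} (f : R -> V) s l :
  is_derive f s l -> forall e, 0 < e -> exists d, 0 < d /\
    forall w, Rabs (w - s) < d ->
      norm (minus (minus (f w) (f s)) (scal (w - s) l)) <= e * Rabs (w - s).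
Proof.
  intros [_ Hd] e He.
  specialize (Hd s (fun P H => H)).
  destruct (Hd (mkposreal e He)) as [d Hd2].
  exists (pos d). split. apply cond_pos. intros w Hw.
  apply (Hd2 w Hw).
Qed.

Lemma norm_minus_self {V : NormedModule R_AbsRing} (a : V) : norm (minus a a) = 0.
Proof. rewrite minus_eq_zero. apply norm_zero. Qed.

Lemma norm_le_minus {V : NormedModule R_AbsRing} (a b : V) : norm a <= norm (minus a b) + norm b.
Proof.
  replace a with (plus (minus a b) b) at 1.
  apply norm_triangle.
  unfold minus. rewrite <- plus_assoc, plus_opp_l, plus_zero_r. reflexivity.
Qed.

Lemma norm_tri {V : NormedModule R_AbsRing} (x y : V) : norm (plus x y) <= norm x + norm y.
Proof. apply norm_triangle. Qed.

Lemma norm_minus_le {V : NormedModule R_AbsRing} (x y : V) : norm (minus x y) <= norm x + norm y.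
Proof. unfold minus. eapply Rle_trans. apply norm_triangle. rewrite norm_opp. lra. Qed.

Lemma le_eps_limit a b c : 0 <= c -> (forall e, 0 < e -> a <= b + e * c + e) -> a <= b.
Proof.
  intros Hc H. destruct (Rle_lt_dec a b) as [|Hlt]; auto.
  set (e := (a - b) / (2 * (c + 1))).
  assert (He : 0 < e) by (unfold e; apply Rdiv_lt_0_compat; lra).
  specialize (H e He).
  assert (e * c + e = (a - b) / 2 * ((c + 1) / (c+1))) by (unfold e; field; lra).
  rewrite Rdiv_diag in H0 by lra. lra.
Qed.

Lemma mvt_gen {V : NormedModule R_AbsRing} (f df : R -> V) (g dg : R -> R) x y :
  x <= y ->
  (forall z, x <= z <= y -> continuous f z) ->
  (forall z, x <= z <= y -> continuous g z) ->
  (forall z, x < z < y -> is_derive f z (df z)) ->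
  (forall z, x < z < y -> is_derive g z (dg z)) ->
  (forall z, x < z < y -> norm (df z) <= dg z) ->
  norm (minus (f y) (f x)) <= g y - g x.
Proof.
  intros Hxy Hcf Hcg Hdf Hdg Hb.
  apply (le_eps_limit _ _ (y - x)); [lra|]. intros e He.
  set (Q := fun w => norm (minus (f w) (f x)) <= g w - g x + e * (w - x) + e).
  set (E := fun z => x <= z <= y /\ forall w, x <= w <= z -> Q w).
  assert (HQx : Q x).
  { unfold Q. rewrite norm_minus_self. lra. }
  assert (HEx : E x).
  { split. lra. intros w Hw. replace w with x by lra. exact HQx. }
  assert (Hbd : bound E).
  { exists y. intros z [Hz _]. lra. }
  destruct (completeness E Hbd (ex_intro _ x HEx)) as [s [Hub Hlub]].
  assert (Hxs : x <= s) by (apply Hub; exact HEx).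
  assert (Hsy : s <= y) by (apply Hlub; intros z [Hz _]; lra).
  assert (C1 : forall w, x <= w < s -> Q w).
  { intros w Hw.
    destruct (Classical_Prop.classic (exists z, E z /\ w <= z)) as [[z [[Hz1 Hz2] Hz3]]|Hn].
    - apply Hz2. lra.
    - exfalso. assert (s <= w). { apply Hlub. intros z Hz.
        destruct (Rle_lt_dec z w); auto. exfalso. apply Hn. exists z. split; auto; lra. }
      lra. }
  assert (C2 : Q s).
  { destruct (Rle_lt_dec s x) as [Hsx|Hsx].
    { replace s with x by lra. exact HQx. }
    destruct (Rle_lt_dec (norm (minus (f s) (f x))) (g s - g x + e * (s - x) + e)) as [|Hgt]; auto.
    exfalso.
    set (h := norm (minus (f s) (f x)) - (g s - g x + e * (s - x) + e)).
    assert (Hh : 0 < h) by (unfold h; lra).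
    destruct (cont_eps f s (Hcf s ltac:(lra)) (h/4) ltac:(lra)) as [d1 [Hd1 Hf1]].
    destruct (cont_eps g s (Hcg s ltac:(lra)) (h/4) ltac:(lra)) as [d2 [Hd2 Hg2]].
    set (d := Rmin (Rmin d1 d2) (Rmin (s - x) (h / (4 * e)))).
    assert (Hd : 0 < d).
    { unfold d. repeat apply Rmin_pos; try lra. apply Rdiv_lt_0_compat; lra. }
    set (w := s - d / 2).
    assert (Hd1' : d <= d1) by (unfold d; repeat (eapply Rle_trans; [apply Rmin_l|]); lra).
    assert (Hd2' : d <= d2) by (unfold d; eapply Rle_trans; [apply Rmin_l|]; apply Rmin_r).
    assert (Hd3 : d <= s - x) by (unfold d; eapply Rle_trans; [apply Rmin_r|]; apply Rmin_l).
    assert (Hd4 : d <= h / (4 * e)) by (unfold d; eapply Rle_trans; [apply Rmin_r|]; apply Rmin_r).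
    assert (Hw : Rabs (w - s) < d) by (unfold w; rewrite Rabs_left; lra).
    specialize (Hf1 w ltac:(lra)). specialize (Hg2 w ltac:(lra)).
    simpl in Hg2. unfold minus, plus, opp in Hg2; simpl in Hg2.
    assert (HQw := C1 w ltac:(unfold w; lra)). unfold Q in HQw.
    assert (Ht := norm_tri3 (f s) (f w) (f x)).
    assert (norm (minus (f s) (f w)) < h / 4).
    { rewrite <- norm_opp, opp_minus. exact Hf1. }
    assert (Hed : e * d <= h / 4).
    { apply Rmult_le_compat_l with (r := e) in Hd4; [|lra].
      replace (e * (h / (4 * e))) with (h / 4) in Hd4 by (field; lra). exact Hd4. }
    unfold abs in Hg2; simpl in Hg2.
    apply Rabs_def2 in Hg2.
    unfold h in *. unfold w in *. nra. }
  assert (C3 : s = y).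
  { destruct (Rle_lt_dec y s) as [|Hsy']; [lra|]. exfalso.
    assert (Hstep : exists d, 0 < d /\ s + d <= y /\ forall w, s < w <= s + d -> Q w).
    { destruct (Rle_lt_dec s x) as [Hsx|Hsx].
      -
        assert (s = x) by lra. subst s.
        destruct (cont_eps f x (Hcf x ltac:(lra)) (e/2) ltac:(lra)) as [d1 [Hd1 Hf1]].
        destruct (cont_eps g x (Hcg x ltac:(lra)) (e/2) ltac:(lra)) as [d2 [Hd2 Hg2]].
        exists (Rmin (Rmin d1 d2) (y - x) / 2).
        assert (0 < Rmin (Rmin d1 d2) (y - x)) by (repeat apply Rmin_pos; lra).
        assert (Rmin (Rmin d1 d2) (y - x) <= d1) by (repeat (eapply Rle_trans; [apply Rmin_l|]); lra).
        assert (Rmin (Rmin d1 d2) (y - x) <= d2) by (eapply Rle_trans; [apply Rmin_l|]; apply Rmin_r).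
        assert (Rmin (Rmin d1 d2) (y - x) <= y - x) by apply Rmin_r.
        split; [lra|]. split; [lra|]. intros w Hw.
        assert (Rabs (w - x) < d1) by (rewrite Rabs_right; lra).
        assert (Rabs (w - x) < d2) by (rewrite Rabs_right; lra).
        specialize (Hf1 w ltac:(lra)). specialize (Hg2 w ltac:(lra)).
        unfold minus, plus, opp in Hg2; simpl in Hg2. unfold abs in Hg2; simpl in Hg2.
        apply Rabs_def2 in Hg2. unfold Q. nra.
      - destruct (deriv_eps f s (df s) (Hdf s ltac:(lra)) (e/2) ltac:(lra)) as [d1 [Hd1 Hf1]].
        destruct (deriv_eps g s (dg s) (Hdg s ltac:(lra)) (e/2) ltac:(lra)) as [d2 [Hd2 Hg2]].
        assert (Hbs := Hb s ltac:(lra)).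
        exists (Rmin (Rmin d1 d2) (y - s) / 2).
        assert (0 < Rmin (Rmin d1 d2) (y - s)) by (repeat apply Rmin_pos; lra).
        assert (Rmin (Rmin d1 d2) (y - s) <= d1) by (repeat (eapply Rle_trans; [apply Rmin_l|]); lra).
        assert (Rmin (Rmin d1 d2) (y - s) <= d2) by (eapply Rle_trans; [apply Rmin_l|]; apply Rmin_r).
        assert (Rmin (Rmin d1 d2) (y - s) <= y - s) by apply Rmin_r.
        split; [lra|]. split; [lra|]. intros w Hw.
        assert (Hws : Rabs (w - s) = w - s) by (rewrite Rabs_right; lra).
        specialize (Hf1 w ltac:(lra)). specialize (Hg2 w ltac:(lra)).
        rewrite Hws in Hf1, Hg2.
        unfold minus at 1 in Hg2. unfold minus at 1 in Hg2. unfold plus, opp, scal in Hg2; simpl in Hg2.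
        unfold mult in Hg2; simpl in Hg2.
        assert (Hg2' : Rabs (g w + - g s + - ((w - s) * dg s)) <= e / 2 * (w - s)) by exact Hg2.
        clear Hg2. assert (Hg3 : - (e / 2 * (w - s)) <= g w + - g s + - ((w - s) * dg s)).
        { revert Hg2'. unfold Rabs. destruct Rcase_abs; lra. }
        assert (T1 := norm_tri3 (f w) (f s) (f x)).
        assert (T2 := norm_le_minus (minus (f w) (f s)) (scal (w - s) (df s))).
        assert (T3 := norm_scal (w - s) (df s)).
        unfold abs in T3; simpl in T3. rewrite Hws in T3.
        unfold Q. unfold Q in C2.
        assert (norm (scal (w - s) (df s)) <= (w - s) * dg s).
        { eapply Rle_trans. apply T3. apply Rmult_le_compat_l; lra. }
        nra. }
    destruct Hstep as [d [Hd [Hsd Hst]]].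
    assert (E (s + d)).
    { split. lra. intros w Hw.
      destruct (Rlt_le_dec w s). apply C1; lra.
      destruct (Req_dec w s). subst; exact C2. apply Hst; lra. }
    assert (s + d <= s) by (apply Hub; auto). lra. }
  subst s. unfold Q in C2. lra.
Qed.

Record C6 := mkC6 { k1 : R; k2 : R; k3 : R; k4 : R; k5 : R; k6 : R }.

Definition P6 {V : ModuleSpace R_Ring} (v1 v2 v3 v4 v5 v6 : V) (c : C6) : V :=
  plus (scal (k1 c) v1) (plus (scal (k2 c) v2) (plus (scal (k3 c) v3)
    (plus (scal (k4 c) v4) (plus (scal (k5 c) v5) (scal (k6 c) v6))))).

Definition C6add c d := mkC6 (k1 c + k1 d) (k2 c + k2 d) (k3 c + k3 d) (k4 c + k4 d) (k5 c + k5 d) (k6 c + k6 d).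
Definition C6scal (k : R) c := mkC6 (k * k1 c) (k * k2 c) (k * k3 c) (k * k4 c) (k * k5 c) (k * k6 c).

Section P6L.
Context {V : ModuleSpace R_Ring} (v1 v2 v3 v4 v5 v6 : V).
Let p := P6 v1 v2 v3 v4 v5 v6.

Let sdr (a b : R) (u : V) : scal (a + b) u = plus (scal a u) (scal b u) := scal_distr_r a b u.
Let sz (u : V) : scal 0 u = zero := scal_zero_l u.
Let so (u : V) : scal 1 u = u := scal_one u.
Let sas (a b : R) (u : V) : scal a (scal b u) = scal (a * b) u := scal_assoc a b u.

Lemma P6_plus c d : plus (p c) (p d) = p (C6add c d).
Proof.
  unfold p, P6, C6add; simpl. rewrite !sdr.
  set (a1 := scal (k1 c) v1). set (b1 := scal (k1 d) v1).
  set (a2 := scal (k2 c) v2). set (b2 := scal (k2 d) v2).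
  set (a3 := scal (k3 c) v3). set (b3 := scal (k3 d) v3).
  set (a4 := scal (k4 c) v4). set (b4 := scal (k4 d) v4).
  set (a5 := scal (k5 c) v5). set (b5 := scal (k5 d) v5).
  set (a6 := scal (k6 c) v6). set (b6 := scal (k6 d) v6).
  assert (sw : forall x y z w : V, plus (plus x y) (plus z w) = plus (plus x z) (plus y w)).
  { intros. rewrite !plus_assoc. f_equal. rewrite <- !plus_assoc. f_equal. apply plus_comm. }
  rewrite (sw a1), (sw a2), (sw a3), (sw a4), (sw a5). reflexivity.
Qed.

Lemma P6_scal k c : scal k (p c) = p (C6scal k c).
Proof.
  unfold p, P6, C6scal; simpl. rewrite !scal_distr_l, !sas. reflexivity.
Qed.

Lemma P6_opp c : opp (p c) = p (C6scal (-1) c).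
Proof. rewrite <- P6_scal. exact (eq_sym (scal_opp_one _)). Qed.

Lemma P6_minus c d : minus (p c) (p d) = p (C6add c (C6scal (-1) d)).
Proof. unfold minus. rewrite P6_opp, P6_plus. reflexivity. Qed.

Lemma P6_zero : zero = p (mkC6 0 0 0 0 0 0).
Proof. unfold p, P6; simpl. rewrite !sz, !plus_zero_r. reflexivity. Qed.

Lemma P6_1 : v1 = p (mkC6 1 0 0 0 0 0).
Proof. unfold p, P6; simpl. rewrite !sz, !plus_zero_r, so. reflexivity. Qed.
Lemma P6_2 : v2 = p (mkC6 0 1 0 0 0 0).
Proof. unfold p, P6; simpl. rewrite !sz, !plus_zero_r, plus_zero_l, so. reflexivity. Qed.
Lemma P6_3 : v3 = p (mkC6 0 0 1 0 0 0).
Proof. unfold p, P6; simpl. rewrite !sz, !plus_zero_r, !plus_zero_l, so. reflexivity. Qed.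
Lemma P6_4 : v4 = p (mkC6 0 0 0 1 0 0).
Proof. unfold p, P6; simpl. rewrite !sz, !plus_zero_r, !plus_zero_l, so. reflexivity. Qed.
Lemma P6_5 : v5 = p (mkC6 0 0 0 0 1 0).
Proof. unfold p, P6; simpl. rewrite !sz, !plus_zero_r, !plus_zero_l, so. reflexivity. Qed.
Lemma P6_6 : v6 = p (mkC6 0 0 0 0 0 1).
Proof. unfold p, P6; simpl. rewrite !sz, !plus_zero_l, so. reflexivity. Qed.
End P6L.

Lemma P6_plus' {V : ModuleSpace R_Ring} (v1 v2 v3 v4 v5 v6 : V) p :
  p = P6 v1 v2 v3 v4 v5 v6 -> forall c d, plus (p c) (p d) = p (C6add c d).
Proof. intros ->. apply P6_plus. Qed.
Lemma P6_scal' {V : ModuleSpace R_Ring} (v1 v2 v3 v4 v5 v6 : V) p :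
  p = P6 v1 v2 v3 v4 v5 v6 -> forall k c, scal k (p c) = p (C6scal k c).
Proof. intros ->. apply P6_scal. Qed.
Lemma P6_opp' {V : ModuleSpace R_Ring} (v1 v2 v3 v4 v5 v6 : V) p :
  p = P6 v1 v2 v3 v4 v5 v6 -> forall c, opp (p c) = p (C6scal (-1) c).
Proof. intros ->. apply P6_opp. Qed.
Lemma P6_minus' {V : ModuleSpace R_Ring} (v1 v2 v3 v4 v5 v6 : V) p :
  p = P6 v1 v2 v3 v4 v5 v6 -> forall c d, minus (p c) (p d) = p (C6add c (C6scal (-1) d)).
Proof. intros ->. apply P6_minus. Qed.

Ltac lin6 v1 v2 v3 v4 v5 v6 :=
  let p := fresh "p" in let Hp := fresh "Hp" in
  let H1 := fresh in let H2 := fresh in let H3 := fresh in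
  let H4 := fresh in let H5 := fresh in let H6 := fresh in let H0 := fresh in
  pose proof (P6_1 v1 v2 v3 v4 v5 v6) as H1;
  pose proof (P6_2 v1 v2 v3 v4 v5 v6) as H2;
  pose proof (P6_3 v1 v2 v3 v4 v5 v6) as H3;
  pose proof (P6_4 v1 v2 v3 v4 v5 v6) as H4;
  pose proof (P6_5 v1 v2 v3 v4 v5 v6) as H5;
  pose proof (P6_6 v1 v2 v3 v4 v5 v6) as H6;
  pose proof (P6_zero v1 v2 v3 v4 v5 v6) as H0;
  set (p := P6 v1 v2 v3 v4 v5 v6) in *;
  assert (Hp : p = P6 v1 v2 v3 v4 v5 v6) by reflexivity;
  clearbody p;
  try rewrite H1; try rewrite H2; try rewrite H3; try rewrite H4; try rewrite H5; try rewrite H6;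
  try rewrite H0;
  clear H1 H2 H3 H4 H5 H6 H0;
  repeat first [ rewrite (P6_minus' v1 v2 v3 v4 v5 v6 p Hp)
               | rewrite (P6_plus' v1 v2 v3 v4 v5 v6 p Hp)
               | rewrite (P6_scal' v1 v2 v3 v4 v5 v6 p Hp)
               | rewrite (P6_opp' v1 v2 v3 v4 v5 v6 p Hp) ];
  clear Hp;
  f_equal; unfold C6add, C6scal; simpl; f_equal.

Goal forall (V : NormedModule R_AbsRing) (A B C D : V) (t a b : R),
  let c := a + t * (b - a) in
  minus (plus (scal (1 - t) A) (scal t B)) C =
  plus (scal (1 - t) (minus (minus A C) (scal (a - c) D)))
       (scal t (minus (minus B C) (scal (b - c) D))).
Proof.
  intros. lin6 A B C D (@zero V) (@zero V). all: unfold c; ring.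
Qed.

Lemma norm_minus_sym {V : NormedModule R_AbsRing} (a b : V) : norm (minus a b) = norm (minus b a).
Proof. rewrite <- norm_opp, opp_minus. reflexivity. Qed.

Lemma norm_scal_R {V : NormedModule R_AbsRing} (k : R) (x : V) : norm (scal k x) <= Rabs k * norm x.
Proof. exact (@norm_scal R_AbsRing V k x). Qed.

Lemma cont_R (f : R -> R) z : ex_derive f z -> continuous f z.
Proof. intros H. exact (@ex_derive_continuous R_AbsRing R_NormedModule f z H). Qed.

Lemma mvt_const {V : NormedModule R_AbsRing} (f df : R -> V) M x y :
  x <= y ->
  (forall z, x <= z <= y -> continuous f z) ->
  (forall z, x < z < y -> is_derive f z (df z)) ->
  (forall z, x < z < y -> norm (df z) <= M) ->
  norm (minus (f y) (f x)) <= M * (y - x).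
Proof.
  intros Hxy Hc Hd Hb.
  replace (M * (y - x)) with (M * y - M * x) by ring.
  apply (mvt_gen f df (fun z => M * z) (fun _ => M)); auto.
  - intros z _. apply cont_R. auto_derive. auto.
  - intros z _. auto_derive; auto; ring.
Qed.

Lemma cont_of_derive {V : NormedModule R_AbsRing} (f df : R -> V) lo hi :
  (forall z, lo < z < hi -> is_derive f z (df z)) ->
  forall z, lo < z < hi -> continuous f z.
Proof. intros H z Hz. apply ex_derive_continuous. eexists. apply H; auto. Qed.

Lemma taylor2 {V : NormedModule R_AbsRing} (f f1 f2 : R -> V) lo hi M c y :
  lo < c < hi -> lo <= y <= hi ->
  (forall z, lo <= z <= hi -> continuous f z) ->
  (forall z, lo < z < hi -> is_derive f z (f1 z)) ->
  (forall z, lo < z < hi -> is_derive f1 z (f2 z)) ->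
  (forall z, lo < z < hi -> norm (f2 z) <= M) ->
  norm (minus (minus (f y) (f c)) (scal (y - c) (f1 c))) <= M * (y - c) ^ 2.
Proof.
  intros Hc Hy Hcf Hd1 Hd2 Hb.
  assert (HM : 0 <= M) by (eapply Rle_trans; [apply (norm_ge_0 (f2 c))|apply (Hb c Hc)]).
  set (phi := fun z => minus (f z) (scal (z - c) (f1 c))).
  set (dphi := fun z => minus (f1 z) (scal 1 (f1 c))).
  assert (Hphi : minus (minus (f y) (f c)) (scal (y - c) (f1 c)) = minus (phi y) (phi c)).
  { unfold phi. lin6 (f y) (f c) (f1 c) (@zero V) (@zero V) (@zero V); ring. }
  rewrite Hphi.
  assert (Hcphi : forall z, lo <= z <= hi -> continuous phi z).
  { intros z Hz. unfold phi. apply continuous_minus. apply Hcf; auto.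
    apply (continuous_scal_l (fun z => z - c)).
    apply cont_R. auto_derive. auto. }
  assert (Hdphi : forall z, lo < z < hi -> is_derive phi z (dphi z)).
  { intros z Hz. unfold phi, dphi. apply is_derive_minus. apply Hd1; auto.
    apply (is_derive_scal_l (fun z => z - c)). auto_derive; auto; ring. }
  assert (Hf1 : forall z, lo < z < hi -> norm (minus (f1 z) (f1 c)) <= M * Rabs (z - c)).
  { intros z Hz. destruct (Rle_lt_dec c z).
    - rewrite Rabs_right by lra.
      apply (mvt_const f1 f2); auto; try lra.
      intros w Hw. apply (cont_of_derive f1 f2 lo hi); auto; lra.
      intros w Hw; apply Hd2; lra. intros w Hw; apply Hb; lra.
    - rewrite Rabs_left by lra. rewrite norm_minus_sym.
      replace (M * - (z - c)) with (M * (c - z)) by ring.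
      apply (mvt_const f1 f2); auto; try lra.
      intros w Hw. apply (cont_of_derive f1 f2 lo hi); auto; lra.
      intros w Hw; apply Hd2; lra. intros w Hw; apply Hb; lra. }
  assert (Hdphi1 : forall z, dphi z = minus (f1 z) (f1 c)).
  { intros z. unfold dphi. f_equal. exact (scal_one (f1 c)). }
  destruct (Rle_lt_dec c y).
  - replace (M * (y - c) ^ 2) with (M * (y - c) ^ 2 - M * (c - c) ^ 2) by ring.
    apply (mvt_gen phi dphi (fun z => M * (z - c) ^ 2) (fun z => 2 * M * (z - c))); try lra.
    + intros z Hz; apply Hcphi; lra.
    + intros z Hz. apply cont_R. auto_derive. auto.
    + intros z Hz; apply Hdphi; lra.
    + intros z Hz. auto_derive; auto; ring.
    + intros z Hz. rewrite Hdphi1. eapply Rle_trans. apply Hf1; lra.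
      rewrite Rabs_right by lra. nra.
  - rewrite norm_minus_sym.
    replace (M * (y - c) ^ 2) with ((- M * (c - c) ^ 2) - (- M * (c - y) ^ 2)) by ring.
    apply (mvt_gen phi dphi (fun z => - M * (c - z) ^ 2) (fun z => 2 * M * (c - z))); try lra.
    + intros z Hz; apply Hcphi; lra.
    + intros z Hz. apply cont_R. auto_derive. auto.
    + intros z Hz; apply Hdphi; lra.
    + intros z Hz. auto_derive; auto; ring.
    + intros z Hz. rewrite Hdphi1. eapply Rle_trans. apply Hf1; lra.
      rewrite Rabs_left by lra. nra.
Qed.

Lemma cont_minus' {V : NormedModule R_AbsRing} (f g : R -> V) x :
  continuous f x -> continuous g x -> continuous (fun y => minus (f y) (g y)) x.
Proof. apply continuous_minus. Qed.
Lemma cont_plus' {V : NormedModule R_AbsRing} (f g : R -> V) x :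
  continuous f x -> continuous g x -> continuous (fun y => plus (f y) (g y)) x.
Proof. apply continuous_plus. Qed.
Lemma cont_scal' {V : NormedModule R_AbsRing} (k : R) (f : R -> V) x :
  continuous f x -> continuous (fun y => scal k (f y)) x.
Proof. intros H. exact (@continuous_scal_r R_UniformSpace R_AbsRing V k f x H). Qed.
Lemma cont_comp' {V : NormedModule R_AbsRing} (g : R -> R) (f : R -> V) x :
  continuous g x -> continuous f (g x) -> continuous (fun y => f (g y)) x.
Proof. apply continuous_comp. Qed.

Lemma is_derive_scal_l' {V : NormedModule R_AbsRing} (f : R -> R) x l (k : V) :
  is_derive f x l -> is_derive (fun y => scal (f y) k) x (scal l k).
Proof. intros H. exact (@is_derive_scal_l R_AbsRing V f x l k H). Qed.
Lemma is_derive_plus' {V : NormedModule R_AbsRing} (f g : R -> V) x df dg :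
  is_derive f x df -> is_derive g x dg -> is_derive (fun y => plus (f y) (g y)) x (plus df dg).
Proof. intros H1 H2. exact (@is_derive_plus R_AbsRing V f g x df dg H1 H2). Qed.
Lemma cont_scal_l' {V : NormedModule R_AbsRing} (f : R -> R) (k : V) x :
  continuous f x -> continuous (fun y => scal (f y) k) x.
Proof. intros H. exact (@continuous_scal_l R_UniformSpace R_AbsRing V f k x H). Qed.

Lemma is_derive_scal_r' {V : NormedModule R_AbsRing} (g : R -> V) x l k :
  is_derive g x l -> is_derive (fun y => scal k (g y)) x (scal k l).
Proof.
  intros H. unfold is_derive in *.
  eapply filterdiff_ext_lin.
  apply filterdiff_scal_r_fct. intros n m. apply Rmult_comm. exact H.
  intros y. simpl. rewrite !scal_assoc. f_equal. apply Rmult_comm.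
Qed.

Definition werr {V : NormedModule R_AbsRing} (f : R -> V) a b th :=
  minus (plus (scal (1 - th) (f a)) (scal th (f b))) (f (a + th * (b - a))).

Lemma werr_0 {V : NormedModule R_AbsRing} (f : R -> V) a b : norm (werr f a b 0) = 0.
Proof.
  transitivity (norm (minus (f a) (f a))); [|apply norm_minus_self]. f_equal.
  unfold werr. replace (a + 0 * (b - a)) with a by ring.
  lin6 (f a) (f b) (@zero V) (@zero V) (@zero V) (@zero V); ring.
Qed.

Lemma werr_1 {V : NormedModule R_AbsRing} (f : R -> V) a b : norm (werr f a b 1) = 0.
Proof.
  transitivity (norm (minus (f a) (f a))); [|apply norm_minus_self]. f_equal.
  unfold werr. replace (a + 1 * (b - a)) with b by ring.
  lin6 (f a) (f b) (@zero V) (@zero V) (@zero V) (@zero V); ring.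
Qed.

Lemma werr_bound1 {V : NormedModule R_AbsRing} (f : R -> V) a b th :
  0 <= th <= 1 ->
  norm (werr f a b th) <= (1 - th) * norm (minus (f a) (f (a + th * (b - a))))
                          + th * norm (minus (f b) (f (a + th * (b - a)))).
Proof.
  intros Hth. set (c := a + th * (b - a)).
  assert (E : werr f a b th = plus (scal (1 - th) (minus (f a) (f c))) (scal th (minus (f b) (f c)))).
  { unfold werr; fold c. lin6 (f a) (f b) (f c) (@zero V) (@zero V) (@zero V); ring. }
  rewrite E. eapply Rle_trans. apply norm_tri.
  apply Rplus_le_compat; (eapply Rle_trans; [apply norm_scal_R|]);
  rewrite Rabs_right by lra; lra.
Qed.

Lemma werr_bound2 {V : NormedModule R_AbsRing} (f f1 f2 : R -> V) a b M th :
  a < b -> 0 <= th <= 1 ->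
  (forall z, a <= z <= b -> continuous f z) ->
  (forall z, a < z < b -> is_derive f z (f1 z)) ->
  (forall z, a < z < b -> is_derive f1 z (f2 z)) ->
  (forall z, a < z < b -> norm (f2 z) <= M) ->
  norm (werr f a b th) <= M * (b - a) ^ 2.
Proof.
  intros Hab Hth Hc Hd1 Hd2 Hb.
  assert (HM : 0 <= M).
  { eapply Rle_trans; [apply (norm_ge_0 (f2 ((a+b)/2)))|apply Hb; lra]. }
  destruct (Req_dec th 0) as [->|H0].
  { rewrite werr_0. apply Rmult_le_pos; [lra|apply pow2_ge_0]. }
  destruct (Req_dec th 1) as [->|H1].
  { rewrite werr_1. apply Rmult_le_pos; [lra|apply pow2_ge_0]. }
  set (c := a + th * (b - a)).
  assert (Hc1 : a < c < b) by (unfold c; split; nra).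
  assert (E : werr f a b th =
     plus (scal (1 - th) (minus (minus (f a) (f c)) (scal (a - c) (f1 c))))
          (scal th (minus (minus (f b) (f c)) (scal (b - c) (f1 c))))).
  { unfold werr; fold c. lin6 (f a) (f b) (f c) (f1 c) (@zero V) (@zero V); unfold c; ring. }
  rewrite E. eapply Rle_trans. apply norm_tri.
  assert (Ta := taylor2 f f1 f2 a b M c a Hc1 ltac:(lra) Hc Hd1 Hd2 Hb).
  assert (Tb := taylor2 f f1 f2 a b M c b Hc1 ltac:(lra) Hc Hd1 Hd2 Hb).
  eapply Rle_trans. apply Rplus_le_compat; apply norm_scal_R.
  rewrite !Rabs_right by lra.
  assert ((a - c) ^ 2 <= (b - a) ^ 2) by nra.
  assert ((b - c) ^ 2 <= (b - a) ^ 2) by nra.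
  assert (0 <= 1 - th) by lra.
  apply Rle_trans with ((1 - th) * (M * (a - c) ^ 2) + th * (M * (b - c) ^ 2)).
  apply Rplus_le_compat; apply Rmult_le_compat_l; lra.
  assert (M * (a - c) ^ 2 <= M * (b - a) ^ 2) by (apply Rmult_le_compat_l; lra).
  assert (M * (b - c) ^ 2 <= M * (b - a) ^ 2) by (apply Rmult_le_compat_l; lra).
  nra.
Qed.

Lemma werr_diff {V : NormedModule R_AbsRing} (f f1 f2 f3 : R -> V) a1 b1 a2 b2 M2 M3 h th :
  a1 < a2 -> b1 < b2 -> a1 < b1 -> a2 < b2 -> 0 <= th <= 1 ->
  b1 - a1 <= h -> b2 - a2 <= h ->
  (forall z, a1 <= z <= b2 -> continuous f z) ->
  (forall z, a1 < z < b2 -> is_derive f z (f1 z)) ->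
  (forall z, a1 < z < b2 -> is_derive f1 z (f2 z)) ->
  (forall z, a1 < z < b2 -> is_derive f2 z (f3 z)) ->
  (forall z, a1 < z < b2 -> norm (f2 z) <= M2) ->
  (forall z, a1 < z < b2 -> norm (f3 z) <= M3) ->
  norm (minus (werr f a2 b2 th) (werr f a1 b1 th))
    <= (a2 - a1) * M3 * h ^ 2 + Rabs ((b2 - a2) - (b1 - a1)) * M2 * h.
Proof.
  intros H1 H2 H3 H4 Hth Hh1 Hh2 Hc Hd1 Hd2 Hd3 HM2 HM3.
  set (aa := fun s => a1 + s * (a2 - a1)).
  set (bb := fun s => b1 + s * (b2 - b1)).
  set (cc := fun s => aa s + th * (bb s - aa s)).
  set (F := fun s => werr f (aa s) (bb s) th).
  set (dF := fun s => plus (scal (a2 - a1) (werr f1 (aa s) (bb s) th))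
                      (scal ((b2 - b1) - (a2 - a1)) (scal th (minus (f1 (bb s)) (f1 (cc s)))))).
  assert (E1 : werr f a2 b2 th = F 1) by (unfold F, aa, bb; f_equal; ring).
  assert (E0 : werr f a1 b1 th = F 0) by (unfold F, aa, bb; f_equal; ring).
  rewrite E1, E0.
  replace ((a2 - a1) * M3 * h ^ 2 + Rabs ((b2 - a2) - (b1 - a1)) * M2 * h)
    with (((a2 - a1) * M3 * h ^ 2 + Rabs ((b2 - a2) - (b1 - a1)) * M2 * h) * (1 - 0)) by ring.
  assert (Hrange : forall s, 0 <= s <= 1 ->
     a1 <= aa s /\ aa s <= cc s /\ cc s <= bb s /\ bb s <= b2 /\ aa s < bb s
     /\ bb s - aa s <= h).
  { intros s Hs.
    assert (HD : bb s - aa s = (1 - s) * (b1 - a1) + s * (b2 - a2)) by (unfold aa, bb; ring).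
    assert (HDp : 0 < bb s - aa s).
    { rewrite HD. destruct (Rle_lt_dec s 0). nra. nra. }
    assert (bb s - aa s <= h) by (rewrite HD; nra).
    assert (cc s - aa s = th * (bb s - aa s)) by (unfold cc; ring).
    assert (0 <= th * (bb s - aa s)) by nra.
    assert (th * (bb s - aa s) <= bb s - aa s) by nra.
    assert (a1 <= aa s) by (unfold aa; nra).
    assert (bb s <= b2) by (unfold bb; nra).
    repeat split; lra. }
  assert (Hrange' : forall s, 0 < s < 1 -> a1 < aa s /\ bb s < b2).
  { intros s Hs. unfold aa, bb. split; nra. }
  apply (mvt_const F dF); [lra| | |].
  -
    intros s Hs. destruct (Hrange s Hs) as (R1 & R2 & R3 & R4 & R5 & R6).
    unfold F, werr. fold (cc s).
    apply cont_minus'. apply cont_plus'.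
    + apply (cont_scal' (1 - th) (fun s => f (aa s))).
      apply (cont_comp' aa f). apply cont_R. unfold aa. auto_derive. auto.
      apply Hc. lra.
    + apply (cont_scal' th (fun s => f (bb s))).
      apply (cont_comp' bb f). apply cont_R. unfold bb. auto_derive. auto.
      apply Hc. lra.
    + apply (cont_comp' cc f). apply cont_R. unfold cc, aa, bb. auto_derive. auto.
      apply Hc. lra.
  -
    intros s Hs.
    assert (Hs' : 0 <= s <= 1) by lra.
    destruct (Hrange s Hs') as (R1 & R2 & R3 & R4 & R5 & R6).
    destruct (Hrange' s Hs) as (R7 & R8).
    assert (Da : is_derive (fun s => f (aa s)) s (scal (a2 - a1) (f1 (aa s)))).
    { apply (is_derive_comp f aa). apply Hd1. lra. unfold aa. auto_derive. auto. ring. }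
    assert (Db : is_derive (fun s => f (bb s)) s (scal (b2 - b1) (f1 (bb s)))).
    { apply (is_derive_comp f bb). apply Hd1. lra. unfold bb. auto_derive. auto. ring. }
    assert (Dc : is_derive (fun s => f (cc s)) s
                   (scal ((1 - th) * (a2 - a1) + th * (b2 - b1)) (f1 (cc s)))).
    { apply (is_derive_comp f cc). apply Hd1. lra. unfold cc, aa, bb. auto_derive. auto. ring. }
    assert (DF := is_derive_minus _ _ _ _ _
                   (is_derive_plus _ _ _ _ _ (is_derive_scal_r' _ _ _ (1 - th) Da)
                                            (is_derive_scal_r' _ _ _ th Db)) Dc).
    unfold F, werr. fold (cc s).
    replace (dF s) with (minus
            (plus (scal (1 - th) (scal (a2 - a1) (f1 (aa s))))
               (scal th (scal (b2 - b1) (f1 (bb s)))))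
            (scal ((1 - th) * (a2 - a1) + th * (b2 - b1)) (f1 (cc s)))).
    exact DF.
    unfold dF, werr. fold (cc s).
    lin6 (f1 (aa s)) (f1 (bb s)) (f1 (cc s)) (@zero V) (@zero V) (@zero V); ring.
  -
    intros s Hs.
    assert (Hs' : 0 <= s <= 1) by lra.
    destruct (Hrange s Hs') as (R1 & R2 & R3 & R4 & R5 & R6).
    destruct (Hrange' s Hs) as (R7 & R8).
    unfold dF. eapply Rle_trans. apply norm_tri.
    apply Rplus_le_compat.
    + eapply Rle_trans. apply norm_scal_R. rewrite Rabs_right by lra.
      rewrite Rmult_assoc. apply Rmult_le_compat_l. lra.
      eapply Rle_trans.
      apply (werr_bound2 f1 f2 f3 (aa s) (bb s) M3 th); auto.
      * intros z Hz. apply (cont_of_derive f1 f2 a1 b2); auto; lra.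
      * intros z Hz. apply Hd2. lra.
      * intros z Hz. apply Hd3. lra.
      * intros z Hz. apply HM3. lra.
      * assert (0 <= M3) by (eapply Rle_trans; [apply (norm_ge_0 (f3 (aa s)))|apply HM3; split; lra]).
        apply Rmult_le_compat_l. lra. apply pow_incr. lra.
    + eapply Rle_trans. apply norm_scal_R.
      replace ((b2 - b1) - (a2 - a1)) with ((b2 - a2) - (b1 - a1)) by ring.
      rewrite Rmult_assoc. apply Rmult_le_compat_l. apply Rabs_pos.
      eapply Rle_trans. apply norm_scal_R. rewrite Rabs_right by lra.
      assert (Hn : norm (minus (f1 (bb s)) (f1 (cc s))) <= M2 * (bb s - cc s)).
      { apply (mvt_const f1 f2). lra.
        intros z Hz. apply (cont_of_derive f1 f2 a1 b2); auto; lra.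
        intros z Hz. apply Hd2. lra.
        intros z Hz. apply HM2. lra. }
      assert (0 <= M2) by (eapply Rle_trans; [apply (norm_ge_0 (f2 (aa s)))|apply HM2; split; lra]).
      assert (bb s - cc s <= h) by (unfold cc; nra).
      assert (M2 * (bb s - cc s) <= M2 * h) by (apply Rmult_le_compat_l; lra).
      assert (0 <= norm (minus (f1 (bb s)) (f1 (cc s)))) by apply norm_ge_0.
      nra.
Qed.

Lemma lin_RInt {V : CompleteNormedModule R_AbsRing} (A B : V) :
  is_RInt (fun th => plus (scal (1 - th) A) (scal th B)) 0 1 (scal (1/2) (plus A B)).
Proof.
  set (G := fun th : R => plus (scal (th - th ^ 2 / 2) A) (scal (th ^ 2 / 2) B)).
  replace (scal (1/2) (plus A B)) with (minus (G 1) (G 0)).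
  apply (is_RInt_derive G).
  - intros x _. unfold G.
    assert (D1 : is_derive (fun th : R => th - th ^ 2 / 2) x (1 - x)) by (auto_derive; auto; field).
    assert (D2 : is_derive (fun th : R => th ^ 2 / 2) x x) by (auto_derive; auto; field).
    exact (is_derive_plus' _ _ x _ _ (is_derive_scal_l' _ x _ A D1) (is_derive_scal_l' _ x _ B D2)).
  - intros x _.
    assert (C1 : continuous (fun th : R => 1 - th) x) by (apply cont_R; auto_derive; auto).
    assert (C2 : continuous (fun th : R => th) x) by (apply cont_R; auto_derive; auto).
    exact (cont_plus' _ _ x (cont_scal_l' _ A x C1) (cont_scal_l' _ B x C2)).
  - unfold G. lin6 A B (@zero V) (@zero V) (@zero V) (@zero V); field.
Qed.

Lemma uh_RInt {V : CompleteNormedModule R_AbsRing} (uh : R -> V) a b :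
  a < b ->
  (forall t, a <= t <= b -> uh t = plus (scal ((b - t) / (b - a)) (uh a)) (scal ((t - a) / (b - a)) (uh b))) ->
  RInt uh a b = scal (b - a) (scal (1/2) (plus (uh a) (uh b))).
Proof.
  intros Hab Hl.
  set (A := uh a). set (B := uh b).
  rewrite (RInt_ext uh (fun t => plus (scal ((b - t) / (b - a)) A) (scal ((t - a) / (b - a)) B))).
  2: { intros x Hx. rewrite Rmin_left in Hx by lra. rewrite Rmax_right in Hx by lra. apply Hl. lra. }
  apply is_RInt_unique.
  set (G := fun t : R => plus (scal (- (b - t) ^ 2 / (2 * (b - a))) A) (scal ((t - a) ^ 2 / (2 * (b - a))) B)).
  replace (scal (b - a) (scal (1 / 2) (plus A B))) with (minus (G b) (G a)).
  apply (is_RInt_derive G).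
  - intros x _. unfold G.
    assert (D1 : is_derive (fun t : R => - (b - t) ^ 2 / (2 * (b - a))) x ((b - x) / (b - a))) by (auto_derive; [lra|field; lra]).
    assert (D2 : is_derive (fun t : R => (t - a) ^ 2 / (2 * (b - a))) x ((x - a) / (b - a))) by (auto_derive; [lra|field; lra]).
    exact (is_derive_plus' _ _ x _ _ (is_derive_scal_l' _ x _ A D1) (is_derive_scal_l' _ x _ B D2)).
  - intros x _.
    assert (C1 : continuous (fun t : R => (b - t) / (b - a)) x) by (apply cont_R; auto_derive; lra).
    assert (C2 : continuous (fun t : R => (t - a) / (b - a)) x) by (apply cont_R; auto_derive; lra).
    exact (cont_plus' _ _ x (cont_scal_l' _ A x C1) (cont_scal_l' _ B x C2)).
  - unfold G. lin6 A B (@zero V) (@zero V) (@zero V) (@zero V); field; lra.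
Qed.

Lemma E_repr {V : CompleteNormedModule R_AbsRing} (f : R -> V) a b :
  a < b -> (forall z, continuous f z) ->
  RInt (werr f a b) 0 1 = minus (scal (1/2) (plus (f a) (f b))) (scal (/ (b - a)) (RInt f a b)).
Proof.
  intros Hab Hc.
  assert (Hg : ex_RInt (fun th => f (a + th * (b - a))) 0 1).
  { apply ex_RInt_continuous. intros z _. apply (cont_comp' (fun th => a + th * (b - a)) f).
    apply cont_R. auto_derive. auto. apply Hc. }
  assert (Hl := lin_RInt (f a) (f b)).
  transitivity (minus (RInt (fun th => plus (scal (1 - th) (f a)) (scal th (f b))) 0 1)
                      (RInt (fun th => f (a + th * (b - a))) 0 1)).
  { rewrite <- RInt_minus; [| eexists; exact Hl | exact Hg].
    apply RInt_ext. intros; unfold werr; reflexivity. }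
  rewrite (is_RInt_unique _ _ _ _ Hl). f_equal.
  assert (Hcl := RInt_comp_lin f (b - a) a 0 1).
  replace ((b - a) * 0 + a) with a in Hcl by ring.
  replace ((b - a) * 1 + a) with b in Hcl by ring.
  rewrite <- Hcl.
  2: { apply ex_RInt_continuous. intros; apply Hc. }
  rewrite RInt_scal.
  2: { apply (ex_RInt_ext (fun th => f (a + th * (b - a)))). intros x _. f_equal. ring. exact Hg. }
  rewrite scal_assoc. 
  replace (mult (/ (b - a)) (b - a)) with 1 by (unfold mult; simpl; field; lra).
  rewrite (scal_one (V := V)). apply RInt_ext. intros x _. f_equal. ring.
Qed.

Lemma psi_step {V : CompleteNormedModule R_AbsRing} (f uh : R -> V) a b :
  a < b -> (forall z, continuous f z) ->
  (forall t, a <= t <= b -> uh t = plus (scal ((b - t) / (b - a)) (uh a)) (scal ((t - a) / (b - a)) (uh b))) ->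
  RInt uh a b = RInt f a b ->
  minus (f b) (uh b) = minus (scal 2 (RInt (werr f a b) 0 1)) (minus (f a) (uh a)).
Proof.
  intros Hab Hc Hl Hi.
  rewrite (E_repr f a b Hab Hc), <- Hi, (uh_RInt uh a b Hab Hl).
  lin6 (f a) (f b) (uh a) (uh b) (@zero V) (@zero V); field; lra.
Qed.

Lemma psi_inside {V : NormedModule R_AbsRing} (f uh : R -> V) a b t :
  a < b -> a <= t <= b ->
  (forall t, a <= t <= b -> uh t = plus (scal ((b - t) / (b - a)) (uh a)) (scal ((t - a) / (b - a)) (uh b))) ->
  norm (minus (f t) (uh t)) <= norm (minus (f a) (uh a)) + norm (minus (f b) (uh b))
                               + norm (werr f a b ((t - a) / (b - a))).
Proof.
  intros Hab Ht Hl.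
  set (th := (t - a) / (b - a)).
  assert (Hth : 0 <= th <= 1).
  { unfold th. split. apply Rdiv_le_0_compat; lra.
    apply (Rmult_le_reg_r (b - a)); [lra|]. unfold Rdiv. rewrite Rmult_assoc, Rinv_l; lra. }
  assert (Et : a + th * (b - a) = t) by (unfold th; field; lra).
  assert (E : minus (f t) (uh t) =
     minus (plus (scal (1 - th) (minus (f a) (uh a))) (scal th (minus (f b) (uh b)))) (werr f a b th)).
  { rewrite (Hl t Ht). unfold werr. rewrite Et.
    replace ((b - t) / (b - a)) with (1 - th) by (unfold th; field; lra).
    lin6 (f a) (f b) (uh a) (uh b) (f t) (@zero V). all: unfold th; field; lra. }
  rewrite E. eapply Rle_trans. apply norm_minus_le.
  apply Rplus_le_compat_r. eapply Rle_trans. apply norm_tri.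
  assert (H1 := norm_scal_R (1 - th) (minus (f a) (uh a))).
  assert (H2 := norm_scal_R th (minus (f b) (uh b))).
  rewrite Rabs_right in H1, H2 by lra.
  assert (0 <= norm (minus (f a) (uh a))) by apply norm_ge_0.
  assert (0 <= norm (minus (f b) (uh b))) by apply norm_ge_0.
  nra.
Qed.

Lemma cont_of_eps {V : NormedModule R_AbsRing} (f : R -> V) s :
  (forall e, 0 < e -> exists d, 0 < d /\ forall w, Rabs (w - s) < d -> norm (minus (f w) (f s)) < e) ->
  continuous f s.
Proof.
  intros H. apply filterlim_locally. intros eps.
  destruct (H eps (cond_pos eps)) as [d [Hd Hw]].
  exists (mkposreal d Hd). intros w Hw'. apply norm_compat1. apply Hw. exact Hw'.
Qed.

Lemma at_right_eps {V : NormedModule R_AbsRing} (u : R -> V) x :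
  filterlim u (at_right x) (locally (u x)) ->
  forall e, 0 < e -> exists d, 0 < d /\ forall w, x < w < x + d -> norm (minus (u w) (u x)) < e.
Proof.
  intros Hc e He.
  assert (Hnf := @norm_factor_gt_0 R_AbsRing V).
  assert (He' : 0 < e / @norm_factor R_AbsRing V) by (apply Rdiv_lt_0_compat; lra).
  destruct (proj1 (filterlim_locally u (u x)) Hc (mkposreal _ He')) as [d Hd].
  exists (pos d). split. apply cond_pos. intros w Hw.
  assert (Hb : ball x d w).
  { change (Rabs (w - x) < d). rewrite Rabs_right; lra. }
  specialize (Hd w Hb ltac:(lra)). apply norm_compat2 in Hd. simpl in Hd.
  replace e with (@norm_factor R_AbsRing V * (e / @norm_factor R_AbsRing V)) by (field; lra). exact Hd.
Qed.

Lemma at_left_eps {V : NormedModule R_AbsRing} (u : R -> V) x :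
  filterlim u (at_left x) (locally (u x)) ->
  forall e, 0 < e -> exists d, 0 < d /\ forall w, x - d < w < x -> norm (minus (u w) (u x)) < e.
Proof.
  intros Hc e He.
  assert (Hnf := @norm_factor_gt_0 R_AbsRing V).
  assert (He' : 0 < e / @norm_factor R_AbsRing V) by (apply Rdiv_lt_0_compat; lra).
  destruct (proj1 (filterlim_locally u (u x)) Hc (mkposreal _ He')) as [d Hd].
  exists (pos d). split. apply cond_pos. intros w Hw.
  assert (Hb : ball x d w).
  { change (Rabs (w - x) < d). rewrite Rabs_left; lra. }
  specialize (Hd w Hb ltac:(lra)). apply norm_compat2 in Hd. simpl in Hd.
  replace e with (@norm_factor R_AbsRing V * (e / @norm_factor R_AbsRing V)) by (field; lra). exact Hd.
Qed.

Definition clamp (T t : R) := Rmax 0 (Rmin t T).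

Lemma clamp_id T t : 0 <= t <= T -> clamp T t = t.
Proof. intros H. unfold clamp. rewrite Rmin_left by lra. rewrite Rmax_right; lra. Qed.

Lemma clamp_range T t : 0 <= T -> 0 <= clamp T t <= T.
Proof. intros H. unfold clamp. split. apply Rmax_l. apply Rmax_lub. lra. apply Rmin_r. Qed.

Lemma ue_cont {V : NormedModule R_AbsRing} (u u1 : R -> V) T :
  0 < T ->
  filterlim u (at_right 0) (locally (u 0)) ->
  filterlim u (at_left T) (locally (u T)) ->
  (forall t, 0 < t < T -> is_derive u t (u1 t)) ->
  forall t, continuous (fun s => u (clamp T s)) t.
Proof.
  intros HT H0 HTl Hd t. apply cont_of_eps. intros e He.
  destruct (Rlt_le_dec t 0) as [Ht0|Ht0].
  { exists (- t). split. lra. intros w Hw.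
    assert (w < 0) by (apply Rabs_def2 in Hw; lra).
    unfold clamp. rewrite (Rmin_left w), (Rmin_left t) by lra.
    rewrite (Rmax_left 0 w), (Rmax_left 0 t) by lra. rewrite norm_minus_self. lra. }
  destruct (Req_dec t 0) as [Ht|Ht].
  { subst t. destruct (at_right_eps u 0 H0 e He) as [d [Hd0 Hw]].
    exists (Rmin d T). split. apply Rmin_pos; lra. intros w Hw'.
    assert (Rabs (w - 0) < d) by (eapply Rlt_le_trans; [apply Hw'|apply Rmin_l]).
    assert (Rabs (w - 0) < T) by (eapply Rlt_le_trans; [apply Hw'|apply Rmin_r]).
    apply Rabs_def2 in H. apply Rabs_def2 in H1.
    rewrite (clamp_id T 0) by lra.
    destruct (Rle_lt_dec w 0).
    - unfold clamp at 1. rewrite Rmin_left, Rmax_left by lra. rewrite norm_minus_self. lra.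
    - rewrite clamp_id by lra. apply Hw. lra. }
  destruct (Rlt_le_dec t T) as [HtT|HtT].
  { assert (Hc := cont_of_derive u u1 0 T Hd t ltac:(lra)).
    destruct (cont_eps u t Hc e He) as [d [Hd' Hw]].
    exists (Rmin d (Rmin t (T - t))). split. repeat apply Rmin_pos; lra. intros w Hw'.
    assert (Rabs (w - t) < d) by (eapply Rlt_le_trans; [apply Hw'|apply Rmin_l]).
    assert (Rabs (w - t) < Rmin t (T - t)) by (eapply Rlt_le_trans; [apply Hw'|apply Rmin_r]).
    assert (Rmin t (T - t) <= t) by apply Rmin_l.
    assert (Rmin t (T - t) <= T - t) by apply Rmin_r.
    apply Rabs_def2 in H1.
    rewrite !clamp_id by lra. apply Hw. auto. }
  destruct (Req_dec t T) as [Ht'|Ht'].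
  { subst t. destruct (at_left_eps u T HTl e He) as [d [Hd' Hw]].
    exists (Rmin d T). split. apply Rmin_pos; lra. intros w Hw'.
    assert (Rabs (w - T) < d) by (eapply Rlt_le_trans; [apply Hw'|apply Rmin_l]).
    assert (Rabs (w - T) < T) by (eapply Rlt_le_trans; [apply Hw'|apply Rmin_r]).
    apply Rabs_def2 in H. apply Rabs_def2 in H1.
    rewrite (clamp_id T T) by lra.
    destruct (Rle_lt_dec T w).
    - unfold clamp at 1. rewrite Rmin_right, Rmax_right by lra. rewrite norm_minus_self. lra.
    - rewrite clamp_id by lra. apply Hw. lra. }
  { exists (t - T). split. lra. intros w Hw.
    assert (T < w) by (apply Rabs_def2 in Hw; lra).
    unfold clamp. rewrite (Rmin_right w), (Rmin_right t) by lra.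
    rewrite norm_minus_self. lra. }
Qed.

Lemma ue_deriv {V : NormedModule R_AbsRing} (u u1 : R -> V) T t :
  0 < t < T -> is_derive u t (u1 t) -> is_derive (fun s => u (clamp T s)) t (u1 t).
Proof.
  intros Ht Hd. apply (is_derive_ext_loc u). 2: exact Hd.
  assert (Hp : 0 < Rmin t (T - t)) by (apply Rmin_pos; lra).
  exists (mkposreal _ Hp). intros w Hw. change (Rabs (w - t) < Rmin t (T - t)) in Hw.
  assert (Rmin t (T - t) <= t) by apply Rmin_l.
  assert (Rmin t (T - t) <= T - t) by apply Rmin_r.
  apply Rabs_def2 in Hw. rewrite clamp_id by lra. reflexivity.
Qed.

Lemma exp_mono x y : x <= y -> exp x <= exp y.
Proof. intros [H|H]. left; apply exp_increasing; auto. subst; lra. Qed.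

Lemma ln_mono x y : 0 < x -> x <= y -> ln x <= ln y.
Proof. intros Hx [H|H]. left; apply ln_increasing; auto. subst; lra. Qed.

Lemma Rpower_pos x a : 0 < Rpower x a.
Proof. unfold Rpower. apply exp_pos. Qed.

Lemma Rpower_1_base a : Rpower 1 a = 1.
Proof. unfold Rpower. rewrite ln_1, Rmult_0_r, exp_0. reflexivity. Qed.

Lemma Rpower_cmp w w' y z k a :
  0 < y -> y <= w <= z -> y <= w' <= z -> z <= k * y -> 1 <= k ->
  Rpower w a <= Rpower k (Rabs a) * Rpower w' a.
Proof.
  intros Hy Hw Hw' Hz Hk. unfold Rpower. rewrite <- exp_plus. apply exp_mono.
  assert (L1 : ln z <= ln k + ln y).
  { rewrite <- ln_mult by lra. apply ln_mono; lra. }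
  assert (ln y <= ln w) by (apply ln_mono; lra).
  assert (ln w <= ln z) by (apply ln_mono; lra).
  assert (ln y <= ln w') by (apply ln_mono; lra).
  assert (ln w' <= ln z) by (apply ln_mono; lra).
  assert (Hd : Rabs (ln w - ln w') <= ln k).
  { apply Rabs_le. lra. }
  assert (a * (ln w - ln w') <= Rabs a * ln k).
  { eapply Rle_trans. apply Rle_abs. rewrite Rabs_mult.
    apply Rmult_le_compat_l. apply Rabs_pos. exact Hd. }
  lra.
Qed.

Lemma Rpower_le_one x a : 1 <= x -> a <= 0 -> Rpower x a <= 1.
Proof.
  intros Hx Ha. unfold Rpower. rewrite <- exp_0. apply exp_mono.
  assert (0 <= ln x) by (rewrite <- ln_1; apply ln_mono; lra). nra.
Qed.

Lemma Rpower_ge_one x a : 1 <= x -> 0 <= a -> 1 <= Rpower x a.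
Proof.
  intros Hx Ha. unfold Rpower. rewrite <- exp_0. apply exp_mono.
  assert (0 <= ln x) by (rewrite <- ln_1; apply ln_mono; lra). nra.
Qed.

Lemma Rpower_mono x y a : 0 < x -> x <= y -> 0 <= a -> Rpower x a <= Rpower y a.
Proof. intros. apply Rle_Rpower_l; auto. Qed.

Lemma Rpower_mono_neg x y a : 0 < x -> x <= y -> a <= 0 -> Rpower y a <= Rpower x a.
Proof.
  intros Hx Hy Ha. unfold Rpower. apply exp_mono.
  assert (ln x <= ln y) by (apply ln_mono; lra). nra.
Qed.

Lemma is_derive_Rpower x a : 0 < x -> is_derive (fun y => Rpower y a) x (a * Rpower x (a - 1)).
Proof. intros Hx. apply is_derive_Reals. apply derivable_pt_lim_power. exact Hx. Qed.

Lemma cont_Rpower x a : 0 < x -> continuity_pt (fun y => Rpower y a) x.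
Proof.
  intros Hx. apply derivable_continuous_pt. exists (a * Rpower x (a - 1)).
  apply derivable_pt_lim_power. exact Hx.
Qed.

Lemma Rpower_mvt x y a : 0 < x -> x <= y ->
  exists xi, x <= xi <= y /\ Rpower y a - Rpower x a = a * Rpower xi (a - 1) * (y - x).
Proof.
  intros Hx Hxy.
  destruct (MVT_gen (fun z => Rpower z a) x y (fun z => a * Rpower z (a - 1))) as [c [Hc E]].
  - intros z Hz. rewrite Rmin_left in Hz by lra. apply is_derive_Rpower. lra.
  - intros z Hz. rewrite Rmin_left in Hz by lra. apply cont_Rpower. lra.
  - rewrite Rmin_left, Rmax_right in Hc by lra. exists c. split; auto.
Qed.

Lemma Rpower_mult_base x y a : 0 < x -> 0 < y -> Rpower (x * y) a = Rpower x a * Rpower y a.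
Proof. intros. rewrite Rpower_mult_distr; auto. Qed.

Lemma Rpower_2 x : 0 < x -> Rpower x 2 = x ^ 2.
Proof. intros. replace 2 with (INR 2) by (simpl; ring). apply Rpower_pow. auto. Qed.

Lemma Rpower_3 x : 0 < x -> Rpower x 3 = x ^ 3.
Proof. intros. replace 3 with (INR 3) by (simpl; ring). apply Rpower_pow. auto. Qed.

Lemma Rpower_Rpower x a b : Rpower (Rpower x a) b = Rpower x (a * b).
Proof. apply Rpower_mult. Qed.

Lemma Rpower_plus' x a b : Rpower x (a + b) = Rpower x a * Rpower x b.
Proof. apply Rpower_plus. Qed.

Lemma Rpower_1' x : 0 < x -> Rpower x 1 = x.
Proof. apply Rpower_1. Qed.

Lemma INR_pred j : (1 <= j)%nat -> INR (j - 1) = INR j - 1.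
Proof. intros H. rewrite minus_INR by lia. simpl. ring. Qed.

Lemma INR_pred2 j : (2 <= j)%nat -> INR (j - 2) = INR j - 2.
Proof. intros H. rewrite minus_INR by lia. simpl. ring. Qed.

Lemma mesh_tau_pos T g N : 0 < T -> (1 <= N)%nat -> 0 < mesh_tau T g N.
Proof.
  intros HT HN. unfold mesh_tau. apply Rdiv_lt_0_compat. apply Rpower_pos.
  apply lt_0_INR. lia.
Qed.

Lemma mesh_eq T g N j : (1 <= j)%nat -> mesh T g N j = Rpower (INR j * mesh_tau T g N) g.
Proof. intros H. destruct j. lia. reflexivity. Qed.

Lemma mesh_0 T g N : mesh T g N 0 = 0.
Proof. reflexivity. Qed.

Lemma mesh_pos T g N j : (1 <= j)%nat -> 0 < mesh T g N j.
Proof. intros H. rewrite mesh_eq by auto. apply Rpower_pos. Qed.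

Lemma mesh_lt T g N j k : 0 < T -> 0 < g -> (1 <= N)%nat -> (j < k)%nat -> mesh T g N j < mesh T g N k.
Proof.
  intros HT Hg HN Hjk. assert (Ht := mesh_tau_pos T g N HT HN).
  destruct j.
  - rewrite mesh_0. apply mesh_pos. lia.
  - rewrite !mesh_eq by lia. apply Rlt_Rpower_l; auto. split.
    apply Rmult_lt_0_compat; auto. apply lt_0_INR; lia.
    apply Rmult_lt_compat_r; auto. apply lt_INR; lia.
Qed.

Lemma mesh_le T g N j k : 0 < T -> 0 < g -> (1 <= N)%nat -> (j <= k)%nat -> mesh T g N j <= mesh T g N k.
Proof.
  intros HT Hg HN Hjk. destruct (Nat.eq_dec j k). subst; lra.
  left. apply mesh_lt; auto. lia.
Qed.

Lemma mesh_N T g N : 0 < T -> 0 < g -> (1 <= N)%nat -> mesh T g N N = T.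
Proof.
  intros HT Hg HN. rewrite mesh_eq by auto. unfold mesh_tau.
  replace (INR N * (Rpower T (/ g) / INR N)) with (Rpower T (/ g)).
  rewrite Rpower_Rpower. replace (/ g * g) with 1 by (field; lra). apply Rpower_1'. auto.
  field. apply not_0_INR. lia.
Qed.

Lemma mesh_step T g N j : 0 < T -> 1 <= g -> (1 <= N)%nat -> (1 <= j)%nat ->
  mesh T g N j - mesh T g N (j - 1) <= g * mesh_tau T g N * Rpower (INR j * mesh_tau T g N) (g - 1).
Proof.
  intros HT Hg HN Hj. set (tau := mesh_tau T g N).
  assert (Ht : 0 < tau) by (apply mesh_tau_pos; auto).
  destruct (Nat.eq_dec j 1) as [->|Hj1].
  - simpl (1 - 1)%nat. rewrite mesh_0, mesh_eq by lia. fold tau. simpl INR.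
    rewrite Rmult_1_l.
    replace (Rpower tau g) with (Rpower tau (1 + (g - 1))) by (f_equal; ring).
    rewrite Rpower_plus', Rpower_1' by auto.
    assert (0 < Rpower tau (g - 1)) by apply Rpower_pos.
    assert (tau * Rpower tau (g - 1) <= g * tau * Rpower tau (g - 1)).
    { assert (0 <= (g - 1) * (tau * Rpower tau (g - 1))) by (apply Rmult_le_pos; [lra|nra]).
      nra. }
    lra.
  - rewrite !mesh_eq by lia. fold tau. rewrite INR_pred by lia.
    assert (HI : 1 <= INR j - 1) by (assert (2 <= INR j) by (replace 2 with (INR 2) by (simpl; ring); apply le_INR; lia); lra).
    destruct (Rpower_mvt ((INR j - 1) * tau) (INR j * tau) g) as [xi [Hxi E]].
    + apply Rmult_lt_0_compat; lra.
    + nra.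
    + rewrite E. replace (INR j * tau - (INR j - 1) * tau) with tau by ring.
      assert (Rpower xi (g - 1) <= Rpower (INR j * tau) (g - 1)).
      { apply Rpower_mono; try lra. assert (0 < (INR j - 1) * tau) by (apply Rmult_lt_0_compat; lra). lra. }
      assert (0 < Rpower xi (g - 1)) by apply Rpower_pos.
      replace (g * Rpower xi (g - 1) * tau) with ((g * tau) * Rpower xi (g - 1)) by ring.
      apply Rmult_le_compat_l. nra. auto.
Qed.

Lemma mesh_ratio T g N i j : 0 < T -> 1 <= g -> (1 <= N)%nat -> (1 <= i)%nat -> (j <= 3 * i)%nat ->
  mesh T g N j <= Rpower 3 g * mesh T g N i.
Proof.
  intros HT Hg HN Hi Hj. set (tau := mesh_tau T g N).
  assert (Ht : 0 < tau) by (apply mesh_tau_pos; auto).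
  assert (Hi' : 1 <= INR i) by (replace 1 with (INR 1) by reflexivity; apply le_INR; lia).
  destruct j. { rewrite mesh_0. assert (0 < Rpower 3 g * mesh T g N i).
    apply Rmult_lt_0_compat. apply Rpower_pos. apply mesh_pos; auto. lra. }
  rewrite !mesh_eq by lia. fold tau.
  rewrite <- Rpower_mult_base by (try lra; apply Rmult_lt_0_compat; lra).
  apply Rpower_mono; try lra.
  apply Rmult_lt_0_compat; [apply lt_0_INR; lia|auto].
  assert (INR (S j) <= 3 * INR i).
  { replace 3 with (INR 3) by (simpl; ring). rewrite <- mult_INR. apply le_INR. lia. }
  nra.
Qed.

Lemma mesh_dstep T g N j : 0 < T -> 1 <= g -> (1 <= N)%nat -> (3 <= j)%nat ->
  Rabs ((mesh T g N j - mesh T g N (j - 1)) - (mesh T g N (j - 1) - mesh T g N (j - 2)))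
  <= g * (g - 1) * Rpower 3 (Rabs (g - 2)) * (mesh_tau T g N) ^ 2 * Rpower (INR j * mesh_tau T g N) (g - 2).
Proof.
  intros HT Hg HN Hj. set (tau := mesh_tau T g N).
  assert (Ht : 0 < tau) by (apply mesh_tau_pos; auto).
  assert (HJ : 3 <= INR j) by (replace 3 with (INR 3) by (simpl; ring); apply le_INR; lia).
  rewrite !mesh_eq by lia. fold tau. rewrite INR_pred, INR_pred2 by lia.
  set (X := (INR j - 2) * tau).
  assert (HX : 0 < X) by (unfold X; apply Rmult_lt_0_compat; lra).
  replace ((INR j - 1) * tau) with (X + tau) by (unfold X; ring).
  replace (INR j * tau) with (X + 2 * tau) by (unfold X; ring).
  set (h := fun x => Rpower (x + tau) g - Rpower x g).
  set (dh := fun x => g * Rpower (x + tau) (g - 1) - g * Rpower x (g - 1)).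
  destruct (MVT_gen h X (X + tau) dh) as [xi [Hxi E]].
  - intros z Hz. rewrite Rmin_left in Hz by lra.
    unfold h, dh. apply (is_derive_minus (fun x => Rpower (x + tau) g) (fun x => Rpower x g)).
    + replace (g * Rpower (z + tau) (g - 1)) with (scal 1 (g * Rpower (z + tau) (g - 1))) by (unfold scal; simpl; unfold mult; simpl; ring).
      apply (is_derive_comp (fun y => Rpower y g) (fun x => x + tau)).
      apply is_derive_Rpower. lra. auto_derive; auto. 
    + apply is_derive_Rpower. lra.
  - intros z Hz. rewrite Rmin_left in Hz by lra. unfold h.
    apply continuity_pt_minus.
    + apply (continuity_pt_comp (fun x => x + tau) (fun y => Rpower y g)).
      apply continuity_pt_plus. apply continuity_pt_id. apply continuity_pt_const. intros a b; reflexivity.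
      apply cont_Rpower. lra.
    + apply cont_Rpower. lra.
  - rewrite Rmin_left, Rmax_right in Hxi by lra.
    unfold h in E. cbv beta in E. replace (X + tau + tau) with (X + 2 * tau) in E by ring.
    assert (Hxi0 : 0 < xi) by lra.
    destruct (Rpower_mvt xi (xi + tau) (g - 1)) as [eta [Heta E2]]; try lra.
    unfold dh in E.
    replace (X + 2 * tau - (X + tau) - (X + tau - X)) with 0 by ring.
    replace (Rpower (X + 2 * tau) g - Rpower (X + tau) g - (Rpower (X + tau) g - Rpower X g))
      with (g * (Rpower (xi + tau) (g - 1) - Rpower xi (g - 1)) * tau).
    2: { cbv beta in E. replace (X + tau - X) with tau in E by ring. rewrite E. ring. }
    rewrite E2. replace (xi + tau - xi) with tau by ring. replace (g - 1 - 1) with (g - 2) by ring.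
    assert (Hc := Rpower_cmp eta (X + 2 * tau) X (X + 2 * tau) 3 (g - 2) HX ltac:(lra) ltac:(lra) ltac:(unfold X; assert (0 <= (INR j - 3) * tau) by (apply Rmult_le_pos; lra); nra) ltac:(lra)).
    assert (0 < Rpower eta (g - 2)) by apply Rpower_pos.
    rewrite Rabs_right.
    2: { apply Rle_ge. assert (0 <= g * (g - 1)) by nra.
         replace (g * ((g - 1) * Rpower eta (g - 2) * tau) * tau) with ((g * (g - 1)) * Rpower eta (g - 2) * (tau * tau)) by ring.
         apply Rmult_le_pos. apply Rmult_le_pos; lra. nra. }
    replace (g * ((g - 1) * Rpower eta (g - 2) * tau) * tau) with ((g * (g - 1) * tau ^ 2) * Rpower eta (g - 2)) by ring.
    replace (g * (g - 1) * Rpower 3 (Rabs (g - 2)) * tau ^ 2 * Rpower (X + 2 * tau) (g - 2))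
      with ((g * (g - 1) * tau ^ 2) * (Rpower 3 (Rabs (g - 2)) * Rpower (X + 2 * tau) (g - 2))) by ring.
    apply Rmult_le_compat_l. assert (0 <= g * (g - 1)) by nra. assert (0 < tau ^ 2) by (apply pow_lt; auto). nra.
    exact Hc.
Qed.

Lemma pow_Rpower x a n : 0 < x -> (Rpower x a) ^ n = Rpower x (a * INR n).
Proof. intros Hx. rewrite <- Rpower_pow by apply Rpower_pos. apply Rpower_Rpower. Qed.

Lemma Rpower_mul_same x a b : Rpower x a * Rpower x b = Rpower x (a + b).
Proof. rewrite Rpower_plus'. reflexivity. Qed.

Lemma combine_k j tau a k : 0 < INR j -> 0 < tau ->
  tau ^ k * Rpower (INR j * tau) (a - INR k) = Rpower (INR j) (a - INR k) * Rpower tau a.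
Proof.
  intros Hj Ht. rewrite Rpower_mult_base by auto.
  rewrite <- (Rpower_pow k tau Ht).
  replace (Rpower tau (INR k) * (Rpower (INR j) (a - INR k) * Rpower tau (a - INR k)))
    with (Rpower (INR j) (a - INR k) * (Rpower tau (INR k) * Rpower tau (a - INR k))) by ring.
  rewrite Rpower_mul_same. f_equal. f_equal. ring.
Qed.

Section Core.
Variables (V : CompleteNormedModule R_AbsRing) (T sg g Cu : R) (f f1 f2 f3 : R -> V).
Hypothesis HT : 0 < T.
Hypothesis Hsg : 0 < sg.
Hypothesis Hg : 1 <= g.
Hypothesis HCu : 0 <= Cu.
Hypothesis Hc : forall z, continuous f z.
Hypothesis Hd1 : forall t, 0 < t < T -> is_derive f t (f1 t).
Hypothesis Hd2 : forall t, 0 < t < T -> is_derive f1 t (f2 t).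
Hypothesis Hd3 : forall t, 0 < t < T -> is_derive f2 t (f3 t).
Hypothesis Hb1 : forall t, 0 < t < T -> norm (f1 t) <= Cu * Rpower t (sg - 1).
Hypothesis Hb2 : forall t, 0 < t < T -> norm (f2 t) <= Cu * Rpower t (sg - 2).
Hypothesis Hb3 : forall t, 0 < t < T -> norm (f3 t) <= Cu * Rpower t (sg - 3).

Lemma nms (a : V) : norm (minus a a) = 0.
Proof. exact (norm_minus_self (V := V) a). Qed.
Lemma nsym (a b : V) : norm (minus a b) = norm (minus b a).
Proof. exact (norm_minus_sym (V := V) a b). Qed.
Lemma ntri3 (a b c : V) : norm (minus a c) <= norm (minus a b) + norm (minus b c).
Proof. exact (norm_tri3 (V := V) a b c). Qed.

Lemma F0 y : 0 < y <= T -> norm (minus (f y) (f 0)) <= Cu / sg * Rpower y sg.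
Proof.
  intros Hy. apply (le_eps_limit _ _ 0); [lra|]. intros e He.
  destruct (cont_eps f 0 (Hc 0) e He) as [d [Hd Hw]].
  set (eps := Rmin (d / 2) (y / 2)).
  assert (Heps : 0 < eps) by (unfold eps; apply Rmin_pos; lra).
  assert (Heps1 : eps <= d / 2) by apply Rmin_l.
  assert (Heps2 : eps <= y / 2) by apply Rmin_r.
  assert (H1 : norm (minus (f eps) (f 0)) < e).
  { apply Hw. rewrite Rminus_0_r, Rabs_right; lra. }
  assert (H2 : norm (minus (f y) (f eps)) <= Cu / sg * Rpower y sg - Cu / sg * Rpower eps sg).
  { apply (mvt_gen f f1 (fun z => Cu / sg * Rpower z sg) (fun z => Cu * Rpower z (sg - 1))); try lra.
    - intros z Hz. apply Hc.
    - intros z Hz. apply (continuous_scal_r (K := R_AbsRing) (V := R_NormedModule) (Cu / sg) (fun z => Rpower z sg)).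
      apply continuity_pt_filterlim. apply cont_Rpower. lra.
    - intros z Hz. apply Hd1. split; lra.
    - intros z Hz. replace (Cu * Rpower z (sg - 1)) with (Cu / sg * (sg * Rpower z (sg - 1))) by (field; lra).
      apply is_derive_scal. apply is_derive_Rpower. lra.
    - intros z Hz. apply Hb1. split; lra. }
  assert (0 <= Cu / sg * Rpower eps sg).
  { apply Rmult_le_pos. apply Rdiv_le_0_compat; lra. left; apply Rpower_pos. }
  eapply Rle_trans. apply (norm_tri3 (f y) (f eps) (f 0)).
  apply Rle_trans with (Cu / sg * Rpower y sg - Cu / sg * Rpower eps sg + e).
  apply Rplus_le_compat; [apply H2|left; apply H1]. lra.
Qed.


Lemma W1 N th : (1 <= N)%nat -> 0 <= th <= 1 ->
  norm (werr f 0 (mesh T g N 1) th) <= 2 * (Cu / sg * Rpower (mesh_tau T g N) (g * sg)).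
Proof.
  intros HN Hth.
  set (t1 := mesh T g N 1).
  assert (Ht1 : 0 < t1) by (apply mesh_pos; lia).
  assert (Ht1T : t1 <= T) by (rewrite <- (mesh_N T g N) by (auto; lra); apply mesh_le; auto; lra).
  set (X := Cu / sg * Rpower t1 sg).
  assert (HX : forall y, 0 <= y <= t1 -> norm (minus (f y) (f 0)) <= X).
  { intros y Hy. destruct (Req_dec y 0) as [->|Hy0].
    - rewrite nms. unfold X. apply Rmult_le_pos. apply Rdiv_le_0_compat; lra. left; apply Rpower_pos.
    - eapply Rle_trans. apply F0. lra. unfold X. apply Rmult_le_compat_l. apply Rdiv_le_0_compat; lra.
      apply Rpower_mono; lra. }
  assert (EX : X = Cu / sg * Rpower (mesh_tau T g N) (g * sg)).
  { unfold X, t1. rewrite mesh_eq by lia. simpl INR. rewrite Rmult_1_l. rewrite Rpower_Rpower. reflexivity. }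
  rewrite <- EX.
  eapply Rle_trans. apply werr_bound1. auto.
  set (c := 0 + th * (t1 - 0)).
  assert (Hcr : 0 <= c <= t1) by (unfold c; split; nra).
  assert (N1 : norm (minus (f 0) (f c)) <= X) by (rewrite nsym; apply HX; auto).
  assert (N2 : norm (minus (f t1) (f c)) <= 2 * X).
  { eapply Rle_trans. apply (ntri3 (f t1) (f 0) (f c)).
    assert (norm (minus (f t1) (f 0)) <= X) by (apply HX; lra). lra. }
  apply Rle_trans with ((1 - th) * X + th * (2 * X)).
  apply Rplus_le_compat; apply Rmult_le_compat_l; try lra; [apply N1|apply N2].
  assert (0 <= X) by (unfold X; apply Rmult_le_pos; [apply Rdiv_le_0_compat; lra|left; apply Rpower_pos]). nra.
Qed.

Definition K2 := Rpower (Rpower 3 g) (Rabs (sg - 2)).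
Definition K3 := Rpower (Rpower 3 g) (Rabs (sg - 3)).
Definition K1 := g * (g - 1) * Rpower 3 (Rabs (g - 2)).

Lemma bound_on N i j k z : (1 <= N)%nat -> (1 <= i)%nat -> (i <= j)%nat -> (j <= 3 * i)%nat -> (j <= N)%nat ->
  mesh T g N i < z < mesh T g N j ->
  (k = 2 \/ k = 3) ->
  Rpower z (sg - k) <= Rpower (Rpower 3 g) (Rabs (sg - k)) * Rpower (mesh T g N j) (sg - k).
Proof.
  intros HN Hi Hij Hj3 HjN Hz Hk.
  apply (Rpower_cmp z (mesh T g N j) (mesh T g N i) (mesh T g N j)).
  apply mesh_pos; auto. lra. split. apply mesh_le; auto; lra. lra.
  apply mesh_ratio; auto.
  apply Rpower_ge_one; lra.
Qed.

Lemma Wj N j th : (1 <= N)%nat -> (2 <= j)%nat -> (j <= N)%nat -> 0 <= th <= 1 ->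
  norm (werr f (mesh T g N (j - 1)) (mesh T g N j) th)
    <= Cu * K2 * g ^ 2 * (Rpower (INR j) (g * sg - 2) * Rpower (mesh_tau T g N) (g * sg)).
Proof.
  intros HN Hj HjN Hth.
  set (tau := mesh_tau T g N).
  assert (Htau : 0 < tau) by (apply mesh_tau_pos; auto).
  set (a := mesh T g N (j - 1)). set (b := mesh T g N j).
  assert (Ha : 0 < a) by (apply mesh_pos; lia).
  assert (Hab : a < b) by (apply mesh_lt; auto; lra || lia).
  assert (HbT : b <= T) by (rewrite <- (mesh_N T g N) by (auto; lra); apply mesh_le; auto; lra).
  set (M := Cu * K2 * Rpower b (sg - 2)).
  assert (HK2 : 0 < K2) by apply Rpower_pos.
  eapply Rle_trans. apply (werr_bound2 f f1 f2 a b M th); auto.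
  - intros z Hz. apply Hd1. split; lra.
  - intros z Hz. apply Hd2. split; lra.
  - intros z Hz. eapply Rle_trans. apply Hb2. split; lra. unfold M. rewrite Rmult_assoc.
    apply Rmult_le_compat_l. auto.
    apply (bound_on N (j - 1) j 2 z); auto; lia.
  - assert (Hst := mesh_step T g N j HT Hg HN ltac:(lia)). fold tau a b in Hst.
    assert (HM : 0 <= M) by (unfold M; apply Rmult_le_pos; [apply Rmult_le_pos; lra|left; apply Rpower_pos]).
    apply Rle_trans with (M * (g * tau * Rpower (INR j * tau) (g - 1)) ^ 2).
    apply Rmult_le_compat_l. auto. apply pow_incr. lra.
    assert (Hjp : 0 < INR j) by (apply lt_0_INR; lia).
    assert (Hx : 0 < INR j * tau) by (apply Rmult_lt_0_compat; auto).
    right. unfold M, b. rewrite mesh_eq by lia. fold tau.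
    rewrite Rpower_Rpower.
    replace ((g * tau * Rpower (INR j * tau) (g - 1)) ^ 2) with (g ^ 2 * (tau ^ 2 * (Rpower (INR j * tau) (g - 1)) ^ 2)) by ring.
    rewrite pow_Rpower by auto.
    replace (Cu * K2 * Rpower (INR j * tau) (g * (sg - 2)) * (g ^ 2 * (tau ^ 2 * Rpower (INR j * tau) ((g - 1) * INR 2))))
      with (Cu * K2 * g ^ 2 * (tau ^ 2 * (Rpower (INR j * tau) (g * (sg - 2)) * Rpower (INR j * tau) ((g - 1) * INR 2)))) by ring.
    rewrite Rpower_mul_same.
    replace (g * (sg - 2) + (g - 1) * INR 2) with (g * sg - INR 2) by (simpl; ring).
    rewrite combine_k by auto. simpl INR. replace (1 + 1) with 2 by ring. reflexivity.
Qed.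

Lemma Dj N j th : (1 <= N)%nat -> (3 <= j)%nat -> (j <= N)%nat -> 0 <= th <= 1 ->
  norm (minus (werr f (mesh T g N (j - 1)) (mesh T g N j) th)
              (werr f (mesh T g N (j - 2)) (mesh T g N (j - 1)) th))
    <= Cu * (K3 * g ^ 3 + K1 * K2 * g) * (Rpower (INR j) (g * sg - 3) * Rpower (mesh_tau T g N) (g * sg)).
Proof.
  intros HN Hj HjN Hth.
  set (tau := mesh_tau T g N).
  assert (Htau : 0 < tau) by (apply mesh_tau_pos; auto).
  set (a1 := mesh T g N (j - 2)). set (a2 := mesh T g N (j - 1)). set (b2 := mesh T g N j).
  assert (Ha1 : 0 < a1) by (apply mesh_pos; lia).
  assert (H12 : a1 < a2) by (apply mesh_lt; auto; lra || lia).
  assert (H23 : a2 < b2) by (apply mesh_lt; auto; lra || lia).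
  assert (HbT : b2 <= T) by (rewrite <- (mesh_N T g N) by (auto; lra); apply mesh_le; auto; lra).
  assert (Hjp : 0 < INR j) by (apply lt_0_INR; lia).
  assert (Hx : 0 < INR j * tau) by (apply Rmult_lt_0_compat; auto).
  set (h := g * tau * Rpower (INR j * tau) (g - 1)).
  assert (Hh : 0 <= h) by (unfold h; apply Rmult_le_pos; [nra|left; apply Rpower_pos]).
  set (M2 := Cu * K2 * Rpower b2 (sg - 2)).
  set (M3 := Cu * K3 * Rpower b2 (sg - 3)).
  assert (HK2 : 0 < K2) by apply Rpower_pos.
  assert (HK3 : 0 < K3) by apply Rpower_pos.
  assert (HM2 : 0 <= M2) by (unfold M2; apply Rmult_le_pos; [apply Rmult_le_pos; lra|left; apply Rpower_pos]).
  assert (HM3 : 0 <= M3) by (unfold M3; apply Rmult_le_pos; [apply Rmult_le_pos; lra|left; apply Rpower_pos]).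
  assert (Hs2 := mesh_step T g N j HT Hg HN ltac:(lia)). fold tau a2 b2 in Hs2.
  assert (Hs1 := mesh_step T g N (j - 1) HT Hg HN ltac:(lia)). fold tau in Hs1.
  replace (j - 1 - 1)%nat with (j - 2)%nat in Hs1 by lia. fold a1 a2 in Hs1.
  assert (Hh1 : a2 - a1 <= h).
  { eapply Rle_trans. apply Hs1. unfold h. apply Rmult_le_compat_l. nra.
    apply Rpower_mono; try lra. apply Rmult_lt_0_compat; auto. apply lt_0_INR; lia.
    apply Rmult_le_compat_r. lra. apply le_INR. lia. }
  assert (Hh2 : b2 - a2 <= h) by exact Hs2.
  eapply Rle_trans. apply (werr_diff f f1 f2 f3 a1 a2 a2 b2 M2 M3 h th); auto.
  - intros z Hz. apply Hd1. split; lra.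
  - intros z Hz. apply Hd2. split; lra.
  - intros z Hz. apply Hd3. split; lra.
  - intros z Hz. eapply Rle_trans. apply Hb2. split; lra. unfold M2. rewrite Rmult_assoc.
    apply Rmult_le_compat_l. auto.
    apply (bound_on N (j - 2) j 2 z); auto; lia.
  - intros z Hz. eapply Rle_trans. apply Hb3. split; lra. unfold M3. rewrite Rmult_assoc.
    apply Rmult_le_compat_l. auto.
    apply (bound_on N (j - 2) j 3 z); auto; lia.
  - assert (Hds := mesh_dstep T g N j HT Hg HN Hj). fold tau a1 a2 b2 in Hds.
    assert (I1 : (a2 - a1) * M3 * h ^ 2 <= h * M3 * h ^ 2).
    { apply Rmult_le_compat_r. apply pow_le; auto. apply Rmult_le_compat_r; lra. }
    assert (I2 : Rabs (b2 - a2 - (a2 - a1)) * M2 * h <= (K1 * tau ^ 2 * Rpower (INR j * tau) (g - 2)) * M2 * h).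
    { apply Rmult_le_compat_r; auto. apply Rmult_le_compat_r; auto. }
    apply Rle_trans with (h * M3 * h ^ 2 + (K1 * tau ^ 2 * Rpower (INR j * tau) (g - 2)) * M2 * h).
    lra.
    right. unfold h, M2, M3, b2. rewrite mesh_eq by lia. fold tau.
      rewrite !Rpower_Rpower.
      set (x := INR j * tau).
      replace (g * tau * Rpower x (g - 1) * (Cu * K3 * Rpower x (g * (sg - 3))) * (g * tau * Rpower x (g - 1)) ^ 2 +
               K1 * tau ^ 2 * Rpower x (g - 2) * (Cu * K2 * Rpower x (g * (sg - 2))) * (g * tau * Rpower x (g - 1)))
        with (Cu * K3 * g ^ 3 * (tau ^ 3 * (Rpower x (g - 1) * (Rpower x (g - 1) * Rpower x (g - 1) * Rpower x (g * (sg - 3)))))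
              + Cu * K1 * K2 * g * (tau ^ 3 * (Rpower x (g - 2) * (Rpower x (g * (sg - 2)) * Rpower x (g - 1))))) by ring.
      rewrite !Rpower_mul_same.
      replace (g - 1 + (g - 1 + (g - 1) + g * (sg - 3))) with (g * sg - INR 3) by (simpl; ring).
      replace (g - 2 + (g * (sg - 2) + (g - 1))) with (g * sg - INR 3) by (simpl; ring).
      unfold x. rewrite combine_k by auto. simpl INR. replace (1 + 1 + 1) with 3 by ring. ring.
Qed.

Lemma werr_cont a b th : continuous (werr f a b) th.
Proof.
  unfold werr.
  assert (C1 : continuous (fun th : R => 1 - th) th) by (apply cont_R; auto_derive; auto).
  assert (C2 : continuous (fun th : R => th) th) by (apply cont_R; auto_derive; auto).
  assert (C3 : continuous (fun th : R => a + th * (b - a)) th) by (apply cont_R; auto_derive; auto).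
  exact (cont_minus' _ _ th (cont_plus' _ _ th (cont_scal_l' _ (f a) th C1) (cont_scal_l' _ (f b) th C2))
           (cont_comp' _ f th C3 (Hc _))).
Qed.

Lemma RInt_bound (h : R -> V) B : (forall th, continuous h th) -> (forall th, 0 <= th <= 1 -> norm (h th) <= B) ->
  norm (RInt h 0 1) <= B.
Proof.
  intros Hh HB.
  assert (Ex : ex_RInt h 0 1) by (apply ex_RInt_continuous; intros; apply Hh).
  replace B with (scal (1 - 0) B) by (unfold scal; simpl; unfold mult; simpl; ring).
  apply (norm_RInt_le h (fun _ => B) 0 1 (RInt h 0 1) (scal (1 - 0) B)). lra. exact HB.
  apply RInt_correct. exact Ex. exact (is_RInt_const (V := R_NormedModule) 0 1 B).
Qed.

Lemma Gf_mono (Gf : R -> R) : (forall m, (2 <= m)%nat -> Gf (INR (m - 1)) <= Gf (INR m)) ->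
  forall m, (1 <= m)%nat -> Gf 1 <= Gf (INR m).
Proof.
  intros HG m Hm. induction m. lia.
  destruct (Nat.eq_dec m 0). subst. simpl. lra.
  eapply Rle_trans. apply IHm. lia.
  specialize (HG (S m) ltac:(lia)). replace (S m - 1)%nat with m in HG by lia. exact HG.
Qed.

Definition cA := 2 * (Cu / sg) + Cu * K2 * g ^ 2.
Definition cB := Cu * (K3 * g ^ 3 + K1 * K2 * g).
Definition c0 := cA * (2 + Rpower 2 (Rabs (g * sg - 2))).

Lemma cA_pos : 0 <= cA.
Proof.
  unfold cA. assert (0 < K2) by apply Rpower_pos.
  assert (0 <= Cu / sg) by (apply Rdiv_le_0_compat; lra).
  assert (0 <= Cu * K2 * g ^ 2) by (apply Rmult_le_pos; [nra|apply pow_le; lra]). lra.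
Qed.

Lemma cB_pos : 0 <= cB.
Proof.
  unfold cB, K1. assert (0 < K2) by apply Rpower_pos. assert (0 < K3) by apply Rpower_pos.
  assert (0 < Rpower 3 (Rabs (g - 2))) by apply Rpower_pos.
  apply Rmult_le_pos. lra.
  assert (0 <= K3 * g ^ 3) by (apply Rmult_le_pos; [lra|apply pow_le; lra]).
  assert (0 <= g * (g - 1)) by nra.
  assert (0 <= g * (g - 1) * Rpower 3 (Rabs (g - 2)) * K2 * g).
  { repeat apply Rmult_le_pos; nra. }
  lra.
Qed.

Lemma main_bound (N : nat) (uh : R -> V) (Gf : R -> R) :
  (1 <= N)%nat -> uh 0 = f 0 ->
  (forall n t, (1 <= n <= N)%nat ->
       mesh T g N (n - 1) <= t <= mesh T g N n ->
       uh t = plus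
         (scal ((mesh T g N n - t) / (mesh T g N n - mesh T g N (n - 1))) (uh (mesh T g N (n - 1))))
         (scal ((t - mesh T g N (n - 1)) / (mesh T g N n - mesh T g N (n - 1))) (uh (mesh T g N n)))) ->
  (forall n, (1 <= n <= N)%nat ->
       RInt uh (mesh T g N (n - 1)) (mesh T g N n) = RInt f (mesh T g N (n - 1)) (mesh T g N n)) ->
  (forall m, (2 <= m)%nat -> Gf (INR (m - 1)) <= Gf (INR m)) ->
  (forall m, (3 <= m)%nat -> Rpower (INR m) (g * sg - 3) <= Gf (INR m) - Gf (INR (m - 1))) ->
  forall n t, (1 <= n <= N)%nat -> mesh T g N (n - 1) <= t <= mesh T g N n ->
    norm (minus (f t) (uh t)) <= Rpower (mesh_tau T g N) (g * sg) *
      (2 * c0 + 2 * cB * (Gf (INR n) - Gf 1) + cA * (2 + Rpower 2 (Rabs (g * sg - 2))) * Rpower (INR n) (g * sg - 2)).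
Proof.
  intros HN H0 Hlin Hint HG1 HG2.
  set (tau := mesh_tau T g N).
  assert (Htau : 0 < tau) by (apply mesh_tau_pos; auto).
  set (p := g * sg).
  set (Tp := Rpower tau p).
  assert (HTp : 0 < Tp) by apply Rpower_pos.
  set (tt := fun m => mesh T g N m).
  set (psi := fun m => minus (f (tt m)) (uh (tt m))).
  set (E := fun m => RInt (werr f (tt (m - 1)%nat) (tt m)) 0 1).
  assert (HcA := cA_pos). assert (HcB := cB_pos).
  assert (HGm := Gf_mono Gf HG1).
  assert (Hlt : forall m, (1 <= m <= N)%nat -> tt (m - 1)%nat < tt m).
  { intros m Hm. apply mesh_lt; auto; lra || lia. }
  assert (C_W : forall m th, (1 <= m <= N)%nat -> 0 <= th <= 1 ->
            norm (werr f (tt (m - 1)%nat) (tt m) th) <= cA * (Rpower (INR m) (p - 2) * Tp)).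
  { intros m th Hm Hth. destruct (Nat.eq_dec m 1) as [->|Hm1].
    - unfold tt. simpl (1 - 1)%nat. rewrite mesh_0.
      eapply Rle_trans. apply W1; auto. simpl INR. rewrite Rpower_1_base, Rmult_1_l.
      fold tau p Tp. unfold cA. assert (0 < K2) by apply Rpower_pos.
      assert (0 <= Cu * K2 * g ^ 2 * Tp) by (repeat apply Rmult_le_pos; try lra; apply pow_le; lra).
      lra.
    - eapply Rle_trans. apply Wj; auto; lia. fold tau p Tp.
      unfold cA. assert (0 <= Rpower (INR m) (p - 2) * Tp) by (apply Rmult_le_pos; left; [apply Rpower_pos|auto]).
      assert (0 <= Cu / sg) by (apply Rdiv_le_0_compat; lra). nra. }
  assert (C_E : forall m, (1 <= m <= N)%nat -> norm (E m) <= cA * (Rpower (INR m) (p - 2) * Tp)).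
  { intros m Hm. apply RInt_bound. intros; apply werr_cont. intros th Hth. apply C_W; auto. }
  assert (C_D : forall m, (3 <= m <= N)%nat ->
            norm (minus (E m) (E (m - 1)%nat)) <= cB * (Rpower (INR m) (p - 3) * Tp)).
  { intros m Hm. unfold E.
    replace (m - 1 - 1)%nat with (m - 2)%nat by lia.
    rewrite <- RInt_minus.
    2: { apply ex_RInt_continuous. intros; apply werr_cont. }
    2: { apply ex_RInt_continuous. intros; apply werr_cont. }
    apply RInt_bound.
    - intros th. exact (cont_minus' (V := V) _ _ th (werr_cont _ _ th) (werr_cont _ _ th)).
    - intros th Hth. unfold tt. apply Dj; auto; lia. }
  assert (C_step : forall m, (1 <= m <= N)%nat -> psi m = minus (scal 2 (E m)) (psi (m - 1)%nat)).
  { intros m Hm. unfold psi, E. apply psi_step. apply Hlt; auto. exact Hc.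
    intros t Ht. apply Hlin; auto. apply Hint; auto. }
  assert (C_psi0 : norm (psi 0%nat) = 0).
  { unfold psi, tt. rewrite mesh_0, H0. apply nms. }
  assert (Hc0 : cA <= c0).
  { unfold c0. assert (0 < Rpower 2 (Rabs (g * sg - 2))) by apply Rpower_pos. nra. }
  assert (C_phi : forall m, (1 <= m <= N)%nat ->
     norm (minus (psi m) (E m)) <= Tp * (c0 + cB * (Gf (INR m) - Gf 1))).
  { intros m. induction m as [|m IH]; intros Hm. lia.
    destruct (Nat.eq_dec m 0) as [->|Hm0].
    -
      rewrite (C_step 1%nat) by lia. simpl (1 - 1)%nat.
      apply Rle_trans with (norm (minus (E 1%nat) (psi 0%nat))).
      { right. f_equal. lin6 (E 1%nat) (psi 0%nat) (@zero V) (@zero V) (@zero V) (@zero V); ring. }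
      assert (X1 : norm (minus (E 1%nat) (psi 0%nat)) <= norm (E 1%nat) + norm (psi 0%nat)) by apply (norm_minus_le (V := V)).
      assert (E1 := C_E 1%nat ltac:(lia)). simpl INR in E1. rewrite Rpower_1_base in E1.
      simpl INR. rewrite Rminus_diag, Rmult_0_r, Rplus_0_r.
      nra.
    - destruct (Nat.eq_dec m 1) as [->|Hm1].
      +
        rewrite (C_step 2%nat) by lia. simpl (2 - 1)%nat. rewrite (C_step 1%nat) by lia. simpl (1 - 1)%nat.
        apply Rle_trans with (norm (minus (E 2%nat) (minus (scal 2 (E 1%nat)) (psi 0%nat)))).
        { right. f_equal. lin6 (E 2%nat) (E 1%nat) (psi 0%nat) (@zero V) (@zero V) (@zero V); ring. }
        assert (X1 : norm (minus (E 2%nat) (minus (scal 2 (E 1%nat)) (psi 0%nat)))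
                     <= norm (E 2%nat) + norm (minus (scal 2 (E 1%nat)) (psi 0%nat))) by apply (norm_minus_le (V := V)).
        assert (X2 : norm (minus (scal 2 (E 1%nat)) (psi 0%nat))
                     <= norm (scal 2 (E 1%nat)) + norm (psi 0%nat)) by apply (norm_minus_le (V := V)).
        assert (X3 : norm (scal 2 (E 1%nat)) <= Rabs 2 * norm (E 1%nat)) by apply (norm_scal_R (V := V)).
        rewrite Rabs_right in X3 by lra.
        assert (E2 := C_E 2%nat ltac:(lia)). assert (E1 := C_E 1%nat ltac:(lia)).
        simpl INR in E1. rewrite Rpower_1_base in E1.
        replace (INR 2) with 2 in E2 by (simpl; ring).
        assert (Hp2 : Rpower 2 (p - 2) <= Rpower 2 (Rabs (g * sg - 2))).
        { apply Rle_Rpower. lra. unfold p. apply Rle_abs. }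
        assert (Hg2 : Gf 1 <= Gf (INR 2)) by (apply HGm; lia).
        assert (0 <= cB * (Gf (INR 2) - Gf 1)) by (apply Rmult_le_pos; lra).
        assert (cA * (Rpower 2 (p - 2) * Tp) <= cA * (Rpower 2 (Rabs (g * sg - 2)) * Tp)).
        { apply Rmult_le_compat_l. lra. apply Rmult_le_compat_r; lra. }
        unfold c0. nra.
      +
        set (m' := S m).
        assert (IH' := IH ltac:(lia)).
        rewrite (C_step m') by lia. replace (m' - 1)%nat with m by (unfold m'; lia).
        apply Rle_trans with (norm (minus (minus (E m') (E m)) (minus (psi m) (E m)))).
        { right. f_equal. lin6 (E m') (E m) (psi m) (@zero V) (@zero V) (@zero V); ring. }
        assert (X1 : norm (minus (minus (E m') (E m)) (minus (psi m) (E m)))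
             <= norm (minus (E m') (E m)) + norm (minus (psi m) (E m))) by apply (norm_minus_le (V := V)).
        assert (D := C_D m' ltac:(unfold m'; lia)). replace (m' - 1)%nat with m in D by (unfold m'; lia).
        assert (G2 := HG2 m' ltac:(unfold m'; lia)). replace (m' - 1)%nat with m in G2 by (unfold m'; lia).
        unfold p in *.
        assert (cB * Rpower (INR m') (g * sg - 3) <= cB * (Gf (INR m') - Gf (INR m))).
        { apply Rmult_le_compat_l; lra. }
        nra. }
  assert (C_psi : forall m, (1 <= m <= N)%nat ->
     norm (psi m) <= Tp * (c0 + cB * (Gf (INR m) - Gf 1)) + cA * (Rpower (INR m) (p - 2) * Tp)).
  { intros m Hm. eapply Rle_trans. apply (norm_le_minus (V := V) (psi m) (E m)).
    apply Rplus_le_compat; [apply C_phi|apply C_E]; auto. }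
  intros n t Hn Ht.
  assert (Hab := Hlt n Hn).
  assert (Hth : 0 <= (t - tt (n - 1)%nat) / (tt n - tt (n - 1)%nat) <= 1).
  { split. apply Rdiv_le_0_compat; unfold tt in *; lra.
    apply (Rmult_le_reg_r (tt n - tt (n - 1)%nat)); [lra|]. unfold Rdiv. rewrite Rmult_assoc, Rinv_l; unfold tt in *; lra. }
  assert (HGn : Gf 1 <= Gf (INR n)) by (apply HGm; lia).
  set (Hn' := Rpower (INR n) (p - 2)).
  assert (HHn : 0 < Hn') by apply Rpower_pos.
  assert (B1 : norm (psi (n - 1)%nat) <= Tp * (c0 + cB * (Gf (INR n) - Gf 1)) + cA * (Rpower 2 (Rabs (g * sg - 2)) * Hn' * Tp)).
  { destruct (Nat.eq_dec n 1) as [->|Hn1].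
    - simpl (1 - 1)%nat. rewrite C_psi0.
      assert (0 <= Tp * (c0 + cB * (Gf (INR 1) - Gf 1))).
      { apply Rmult_le_pos. lra. assert (0 <= cB * (Gf (INR 1) - Gf 1)) by (apply Rmult_le_pos; lra). lra. }
      assert (0 <= cA * (Rpower 2 (Rabs (g * sg - 2)) * Hn' * Tp)).
      { apply Rmult_le_pos. lra. apply Rmult_le_pos; [|lra]. apply Rmult_le_pos; left; [apply Rpower_pos|auto]. }
      lra.
    - eapply Rle_trans. apply C_psi. lia.
      assert (HG := HG1 n ltac:(lia)).
      assert (Hcmp : Rpower (INR (n - 1)) (p - 2) <= Rpower 2 (Rabs (p - 2)) * Hn').
      { unfold Hn'. rewrite INR_pred by lia.
        assert (2 <= INR n) by (replace 2 with (INR 2) by (simpl; ring); apply le_INR; lia).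
        apply (Rpower_cmp (INR n - 1) (INR n) (INR n - 1) (INR n) 2 (p - 2)); lra. }
      unfold p in Hcmp.
      assert (cB * (Gf (INR (n - 1)) - Gf 1) <= cB * (Gf (INR n) - Gf 1)) by (apply Rmult_le_compat_l; lra).
      assert (cA * (Rpower (INR (n - 1)) (p - 2) * Tp) <= cA * (Rpower 2 (Rabs (g * sg - 2)) * Hn' * Tp)).
      { apply Rmult_le_compat_l. lra. apply Rmult_le_compat_r. lra. exact Hcmp. }
      nra. }
  assert (B2 := C_psi n Hn). fold Hn' in B2.
  assert (B3 := C_W n ((t - tt (n - 1)%nat) / (tt n - tt (n - 1)%nat)) Hn Hth). fold Hn' in B3.
  eapply Rle_trans. apply (psi_inside (V := V) f uh (tt (n - 1)%nat) (tt n) t Hab Ht).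
  { intros s Hs. apply Hlin; auto. }
  apply Rle_trans with ((Tp * (c0 + cB * (Gf (INR n) - Gf 1)) + cA * (Rpower 2 (Rabs (g * sg - 2)) * Hn' * Tp))
     + (Tp * (c0 + cB * (Gf (INR n) - Gf 1)) + cA * (Hn' * Tp)) + cA * (Hn' * Tp)).
  { apply Rplus_le_compat; [apply Rplus_le_compat|]; [exact B1|exact B2|exact B3]. }
  fold p Tp. right. fold Hn'. ring.
Qed.

End Core.

Lemma lub_ge_lemma (S : R -> Prop) x : (forall e, 0 < e -> exists r, S r /\ x <= r + e) -> Rbar_le x (Lub_Rbar S).
Proof.
  intros H. destruct (Lub_Rbar_correct S) as [Hub _].
  destruct (Lub_Rbar S) as [l| |] eqn:El; simpl; auto.
  - apply (le_eps_limit x l 0); [lra|]. intros e He.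
    destruct (H e He) as [r [Hr Hx]]. specialize (Hub r Hr). simpl in Hub. lra.
  - destruct (H 1 ltac:(lra)) as [r [Hr _]]. specialize (Hub r Hr). simpl in Hub. auto.
Qed.

Lemma lub_le_lemma (S : R -> Prop) B : (forall r, S r -> r <= B) -> Rbar_le (Lub_Rbar S) B.
Proof.
  intros H. destruct (Lub_Rbar_correct S) as [_ Hlub]. apply Hlub.
  intros r Hr. simpl. apply H. auto.
Qed.

Lemma endpoint_approx {V : NormedModule R_AbsRing} (f uh : R -> V) a b :
  a < b -> continuous f b ->
  (forall t, a <= t <= b -> uh t = plus (scal ((b - t) / (b - a)) (uh a)) (scal ((t - a) / (b - a)) (uh b))) ->
  forall e, 0 < e -> exists t, a < t < b /\ norm (minus (f b) (uh b)) <= norm (minus (f t) (uh t)) + e.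
Proof.
  intros Hab Hc Hl e He.
  destruct (cont_eps f b Hc (e / 2) ltac:(lra)) as [d [Hd Hw]].
  set (K := norm (minus (uh b) (uh a)) + 1).
  assert (HK : 0 < K) by (unfold K; assert (0 <= norm (minus (uh b) (uh a))) by apply norm_ge_0; lra).
  set (s := Rmin (d / 2) (Rmin ((b - a) / 2) (e / 2 * (b - a) / K))).
  assert (Hs : 0 < s).
  { unfold s. repeat apply Rmin_pos; try lra. apply Rdiv_lt_0_compat; [|lra]. nra. }
  assert (Hs1 : s <= d / 2) by apply Rmin_l.
  assert (Hs2 : s <= (b - a) / 2) by (eapply Rle_trans; [apply Rmin_r|apply Rmin_l]).
  assert (Hs3 : s <= e / 2 * (b - a) / K) by (eapply Rle_trans; [apply Rmin_r|apply Rmin_r]).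
  exists (b - s). split. split; lra.
  set (t := b - s).
  assert (Ef : norm (minus (f t) (f b)) < e / 2) by (apply Hw; unfold t; rewrite Rabs_left; lra).
  assert (Eu : minus (uh b) (uh t) = scal (s / (b - a)) (minus (uh b) (uh a))).
  { rewrite (Hl t) by (unfold t; lra). unfold t.
    lin6 (uh a) (uh b) (@zero V) (@zero V) (@zero V) (@zero V); field; lra. }
  assert (Eu' : norm (minus (uh b) (uh t)) <= e / 2).
  { rewrite Eu. eapply Rle_trans. apply norm_scal_R. rewrite Rabs_right.
    2: { apply Rle_ge, Rdiv_le_0_compat; lra. }
    apply Rle_trans with (s / (b - a) * K).
    apply Rmult_le_compat_l. apply Rdiv_le_0_compat; lra. unfold K; lra.
    apply (Rmult_le_reg_r (b - a)); [lra|].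
    replace (s / (b - a) * K * (b - a)) with (s * K) by (field; lra).
    apply (Rmult_le_reg_r (/ K)). apply Rinv_0_lt_compat; lra.
    replace (s * K * / K) with s by (field; lra).
    replace (e / 2 * (b - a) * / K) with (e / 2 * (b - a) / K) by (field; lra). exact Hs3. }
  assert (Hdec : minus (minus (f b) (uh b)) (minus (f t) (uh t)) = minus (minus (f b) (f t)) (minus (uh b) (uh t))).
  { lin6 (f b) (uh b) (f t) (uh t) (@zero V) (@zero V); ring. }
  assert (X := norm_le_minus (minus (f b) (uh b)) (minus (f t) (uh t))).
  rewrite Hdec in X.
  assert (X2 := norm_minus_le (minus (f b) (f t)) (minus (uh b) (uh t))).
  rewrite norm_minus_sym in Ef.
  lra.
Qed.

Definition Gfp (p x : R) := Rpower 2 (Rabs (p - 3)) * Rpower x (p - 2) / (p - 2).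

Lemma Gfp_incr p m : p <> 2 -> (2 <= m)%nat ->
  Rpower (INR m) (p - 3) <= Gfp p (INR m) - Gfp p (INR (m - 1)).
Proof.
  intros Hp Hm. rewrite INR_pred by lia.
  assert (H2 : 2 <= INR m) by (replace 2 with (INR 2) by (simpl; ring); apply le_INR; lia).
  destruct (Rpower_mvt (INR m - 1) (INR m) (p - 2)) as [xi [Hxi E]]; try lra.
  unfold Gfp.
  replace (Rpower 2 (Rabs (p - 3)) * Rpower (INR m) (p - 2) / (p - 2) -
           Rpower 2 (Rabs (p - 3)) * Rpower (INR m - 1) (p - 2) / (p - 2))
    with (Rpower 2 (Rabs (p - 3)) * ((Rpower (INR m) (p - 2) - Rpower (INR m - 1) (p - 2)) / (p - 2)))
    by (field; lra).
  rewrite E. replace ((p - 2) * Rpower xi (p - 2 - 1) * (INR m - (INR m - 1)) / (p - 2)) with (Rpower xi (p - 3))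
    by (replace (p - 2 - 1) with (p - 3) by ring; field; lra).
  apply (Rpower_cmp (INR m) xi (INR m - 1) (INR m) 2 (p - 3)); lra.
Qed.

Lemma ln_incr m : (2 <= m)%nat -> Rpower (INR m) (2 - 3) <= ln (INR m) - ln (INR (m - 1)).
Proof.
  intros Hm. rewrite INR_pred by lia.
  assert (H2 : 2 <= INR m) by (replace 2 with (INR 2) by (simpl; ring); apply le_INR; lia).
  replace (2 - 3) with (Ropp 1) by ring. rewrite Rpower_Ropp, Rpower_1' by lra.
  destruct (MVT_gen ln (INR m - 1) (INR m) (fun x => / x)) as [c [Hc E]].
  - intros x Hx. rewrite Rmin_left in Hx by lra. apply is_derive_Reals. apply derivable_pt_lim_ln. lra.
  - intros x Hx. rewrite Rmin_left in Hx by lra. apply derivable_continuous_pt. exists (/ x). apply derivable_pt_lim_ln. lra.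
  - rewrite Rmin_left, Rmax_right in Hc by lra. rewrite E.
    replace (INR m - (INR m - 1)) with 1 by ring. rewrite Rmult_1_r.
    apply Rinv_le_contravar; lra.
Qed.

Theorem corollary3p3
  (V : CompleteNormedModule R_AbsRing) (T sigma gamma : R)
  (u u1 u2 u3 : R -> V) (Cu : R) :
  0 < T -> 0 < sigma -> 1 <= gamma ->
  filterlim u (at_right 0) (locally (u 0)) ->
  filterlim u (at_left T) (locally (u T)) ->
  (forall t, 0 < t < T -> is_derive u t (u1 t)) ->
  (forall t, 0 < t < T -> is_derive u1 t (u2 t)) ->
  (forall t, 0 < t < T -> is_derive u2 t (u3 t)) ->
  (forall t, 0 < t < T ->
     t * norm (u1 t) + t ^ 2 * norm (u2 t) + t ^ 3 * norm (u3 t)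
       <= Cu * Rpower t sigma) ->
  exists C : R, 0 < C /\
  forall (N : nat) (uh : R -> V),
    (1 <= N)%nat ->
    uh 0 = u 0 ->
    (forall n t, (1 <= n <= N)%nat ->
       mesh T gamma N (n - 1) <= t <= mesh T gamma N n ->
       uh t = plus
         (scal ((mesh T gamma N n - t) / (mesh T gamma N n - mesh T gamma N (n - 1)))
               (uh (mesh T gamma N (n - 1))))
         (scal ((t - mesh T gamma N (n - 1)) / (mesh T gamma N n - mesh T gamma N (n - 1)))
               (uh (mesh T gamma N n)))) ->
    (forall n, (1 <= n <= N)%nat ->
       RInt uh (mesh T gamma N (n - 1)) (mesh T gamma N n)
       = RInt u (mesh T gamma N (n - 1)) (mesh T gamma N n)) ->
    forall n, (1 <= n <= N)%nat ->
      let psi := fun t => minus (u t) (uh t) in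
      Rbar_le (norm (psi (mesh T gamma N n)))
              (sup_norm_on psi (mesh T gamma N (n - 1)) (mesh T gamma N n)) /\
      Rbar_le (sup_norm_on psi (mesh T gamma N (n - 1)) (mesh T gamma N n))
              (C * rate T sigma gamma N n).
Proof.
  intros HT Hsg Hg Hu0 HuT Hd1 Hd2 Hd3 Hreg.
  set (ue := fun s => u (clamp T s)).
  assert (Hue_c : forall z, continuous ue z) by (apply (ue_cont u u1 T); auto).
  assert (Hue_d : forall t, 0 < t < T -> is_derive ue t (u1 t)) by (intros t Ht; apply ue_deriv; auto).
  assert (Hue_eq : forall t, 0 <= t <= T -> ue t = u t) by (intros t Ht; unfold ue; rewrite clamp_id; auto).
  assert (HCu : 0 <= Cu).
  { assert (H := Hreg (T / 2) ltac:(split; lra)).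
    assert (0 <= T / 2 * norm (u1 (T / 2))) by (apply Rmult_le_pos; [lra|apply norm_ge_0]).
    assert (0 <= (T / 2) ^ 2 * norm (u2 (T / 2))) by (apply Rmult_le_pos; [apply pow_le; lra|apply norm_ge_0]).
    assert (0 <= (T / 2) ^ 3 * norm (u3 (T / 2))) by (apply Rmult_le_pos; [apply pow_le; lra|apply norm_ge_0]).
    assert (0 < Rpower (T / 2) sigma) by apply Rpower_pos.
    destruct (Rle_lt_dec 0 Cu); auto. nra. }
  assert (Hb : forall t k, 0 < t < T -> (k = 1 \/ k = 2 \/ k = 3)%nat ->
            t ^ k * norm (match k with 1%nat => u1 t | 2%nat => u2 t | _ => u3 t end) <= Cu * (t ^ k * Rpower t (sigma - INR k))).
  { intros t k Ht Hk.
    assert (H := Hreg t Ht).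
    assert (0 <= t * norm (u1 t)) by (apply Rmult_le_pos; [lra|apply norm_ge_0]).
    assert (0 <= t ^ 2 * norm (u2 t)) by (apply Rmult_le_pos; [apply pow_le; lra|apply norm_ge_0]).
    assert (0 <= t ^ 3 * norm (u3 t)) by (apply Rmult_le_pos; [apply pow_le; lra|apply norm_ge_0]).
    assert (Ek : t ^ k * Rpower t (sigma - INR k) = Rpower t sigma).
    { rewrite <- (Rpower_pow k t) by lra. rewrite Rpower_mul_same. f_equal. ring. }
    rewrite Ek.
    destruct Hk as [Hk|[Hk|Hk]]; subst k; cbv beta iota; lra. }
  assert (Hb1 : forall t, 0 < t < T -> norm (u1 t) <= Cu * Rpower t (sigma - 1)).
  { intros t Ht. assert (H := Hb t 1%nat Ht ltac:(auto)). simpl in H.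
    rewrite !Rmult_1_r in H.
    apply (Rmult_le_reg_l t); [lra|]. eapply Rle_trans. apply H. right; ring. }
  assert (Hb2 : forall t, 0 < t < T -> norm (u2 t) <= Cu * Rpower t (sigma - 2)).
  { intros t Ht. assert (H := Hb t 2%nat Ht ltac:(auto)). simpl (match 2%nat with 1%nat => u1 t | 2%nat => u2 t | _ => u3 t end) in H.
    replace (INR 2) with 2 in H by (simpl; ring).
    assert (0 < t ^ 2) by (apply pow_lt; lra).
    apply (Rmult_le_reg_l (t ^ 2)); [lra|]. eapply Rle_trans. apply H. right; ring. }
  assert (Hb3 : forall t, 0 < t < T -> norm (u3 t) <= Cu * Rpower t (sigma - 3)).
  { intros t Ht. assert (H := Hb t 3%nat Ht ltac:(auto)). simpl (match 3%nat with 1%nat => u1 t | 2%nat => u2 t | _ => u3 t end) in H.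
    replace (INR 3) with 3 in H by (simpl; ring).
    assert (0 < t ^ 3) by (apply pow_lt; lra).
    apply (Rmult_le_reg_l (t ^ 3)); [lra|]. eapply Rle_trans. apply H. right; ring. }
  assert (KEY : forall Gf : R -> R,
    (forall m, (2 <= m)%nat -> Gf (INR (m - 1)) <= Gf (INR m)) ->
    (forall m, (3 <= m)%nat -> Rpower (INR m) (gamma * sigma - 3) <= Gf (INR m) - Gf (INR (m - 1))) ->
    forall (N : nat) (uh : R -> V),
    (1 <= N)%nat -> uh 0 = u 0 ->
    (forall n t, (1 <= n <= N)%nat ->
       mesh T gamma N (n - 1) <= t <= mesh T gamma N n ->
       uh t = plus
         (scal ((mesh T gamma N n - t) / (mesh T gamma N n - mesh T gamma N (n - 1)))
               (uh (mesh T gamma N (n - 1))))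
         (scal ((t - mesh T gamma N (n - 1)) / (mesh T gamma N n - mesh T gamma N (n - 1)))
               (uh (mesh T gamma N n)))) ->
    (forall n, (1 <= n <= N)%nat ->
       RInt uh (mesh T gamma N (n - 1)) (mesh T gamma N n)
       = RInt u (mesh T gamma N (n - 1)) (mesh T gamma N n)) ->
    forall n, (1 <= n <= N)%nat ->
      let psi := fun t => minus (u t) (uh t) in
      Rbar_le (norm (psi (mesh T gamma N n)))
              (sup_norm_on psi (mesh T gamma N (n - 1)) (mesh T gamma N n)) /\
      Rbar_le (sup_norm_on psi (mesh T gamma N (n - 1)) (mesh T gamma N n))
              (Rpower (mesh_tau T gamma N) (gamma * sigma) *
                (2 * c0 sigma gamma Cu + 2 * cB sigma gamma Cu * (Gf (INR n) - Gf 1)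
                 + cA sigma gamma Cu * (2 + Rpower 2 (Rabs (gamma * sigma - 2))) * Rpower (INR n) (gamma * sigma - 2)))).
  { intros Gf HG1 HG2 N uh HN H0 Hlin Hint n Hn psi.
    assert (Hg0 : 0 < gamma) by lra.
    assert (Hab : mesh T gamma N (n - 1) < mesh T gamma N n) by (apply mesh_lt; auto; lia).
    assert (Ha0 : 0 <= mesh T gamma N (n - 1)).
    { destruct (Nat.eq_dec (n - 1) 0) as [E|E]. rewrite E, mesh_0; lra. left; apply mesh_pos; lia. }
    assert (HbT : mesh T gamma N n <= T) by (rewrite <- (mesh_N T gamma N) at 2 by auto; apply mesh_le; auto; lia).
    assert (Hint' : forall n, (1 <= n <= N)%nat ->
       RInt uh (mesh T gamma N (n - 1)) (mesh T gamma N n) = RInt ue (mesh T gamma N (n - 1)) (mesh T gamma N n)).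
    { intros m Hm. rewrite Hint by auto. apply RInt_ext. intros x Hx.
      assert (mesh T gamma N (m - 1) < mesh T gamma N m) by (apply mesh_lt; auto; lia).
      assert (Ha0' : 0 <= mesh T gamma N (m - 1)).
      { destruct (Nat.eq_dec (m - 1) 0) as [E|E]. rewrite E, mesh_0; lra. left; apply mesh_pos; lia. }
      assert (mesh T gamma N m <= T) by (rewrite <- (mesh_N T gamma N) at 2 by auto; apply mesh_le; auto; lia).
      rewrite Rmin_left, Rmax_right in Hx by lra. symmetry. apply Hue_eq. lra. }
    assert (H0' : uh 0 = ue 0) by (rewrite H0; symmetry; apply Hue_eq; lra).
    split.
    - apply lub_ge_lemma. intros e He.
      destruct (endpoint_approx ue uh _ _ Hab (Hue_c _) (fun t Ht => Hlin n t Hn Ht) e He) as [t [Ht Hle]].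
      exists (norm (psi t)). split. exists t. split; auto.
      unfold psi. rewrite <- (Hue_eq t) by lra. rewrite <- (Hue_eq (mesh T gamma N n)) by lra. exact Hle.
    - unfold sup_norm_on. apply lub_le_lemma. intros r [t [Ht ->]].
      unfold psi. rewrite <- (Hue_eq t) by lra.
      eapply Rle_trans.
      apply (main_bound V T sigma gamma Cu ue u1 u2 u3 HT Hsg Hg HCu Hue_c Hue_d Hd2 Hd3 Hb1 Hb2 Hb3 N uh Gf HN H0' Hlin Hint' HG1 HG2 n t Hn).
      lra. right. reflexivity. }
  assert (HcA := cA_pos sigma gamma Cu Hsg Hg HCu).
  assert (HcB := cB_pos sigma gamma Cu Hg HCu).
  assert (Hc0 : 0 <= c0 sigma gamma Cu).
  { unfold c0. apply Rmult_le_pos; auto. assert (0 < Rpower 2 (Rabs (gamma * sigma - 2))) by apply Rpower_pos. lra. }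
  set (c0' := c0 sigma gamma Cu) in *. set (cA' := cA sigma gamma Cu) in *. set (cB' := cB sigma gamma Cu) in *.
  set (k2 := 2 + Rpower 2 (Rabs (gamma * sigma - 2))) in *.
  assert (Hk2 : 0 < k2) by (unfold k2; assert (0 < Rpower 2 (Rabs (gamma * sigma - 2))) by apply Rpower_pos; lra).
  assert (Hg0 : 0 < gamma) by lra.
  assert (Hmesh_pos : forall N n, (1 <= N)%nat -> (1 <= n)%nat -> 0 < mesh T gamma N n).
  { intros. apply mesh_pos; auto. }
  destruct (total_order_T (gamma * sigma) 2) as [[Hlt|Heq]|Hgt].
  -
    set (p := gamma * sigma) in *.
    set (cG := Rpower 2 (Rabs (p - 3))).
    assert (HcG : 0 < cG) by apply Rpower_pos.
    exists (2 * c0' + 2 * cB' * (cG / (2 - p)) + cA' * k2 + 1).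
    assert (0 <= cG / (2 - p)) by (apply Rdiv_le_0_compat; lra).
    split. { assert (0 <= 2 * cB' * (cG / (2 - p))) by (apply Rmult_le_pos; lra). nra. }
    intros N uh HN H0 Hlin Hint n Hn.
    assert (HG1 : forall m, (2 <= m)%nat -> Gfp p (INR (m - 1)) <= Gfp p (INR m)).
    { intros m Hm. assert (X := Gfp_incr p m ltac:(lra) Hm). assert (0 < Rpower (INR m) (p - 3)) by apply Rpower_pos. lra. }
    assert (HG2 : forall m, (3 <= m)%nat -> Rpower (INR m) (p - 3) <= Gfp p (INR m) - Gfp p (INR (m - 1))).
    { intros m Hm. apply Gfp_incr. lra. lia. }
    destruct (KEY (Gfp p) HG1 HG2 N uh HN H0 Hlin Hint n Hn) as [K1 K2].
    split; [exact K1|]. eapply Rbar_le_trans; [exact K2|]. simpl.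
    assert (Hn1 : 1 <= INR n) by (replace 1 with (INR 1) by reflexivity; apply le_INR; lia).
    set (y := Rpower (INR n) (p - 2)).
    assert (Hy0 : 0 < y) by apply Rpower_pos.
    assert (Hy1 : y <= 1) by (apply Rpower_le_one; lra).
    assert (EG : Gfp p (INR n) - Gfp p 1 = cG * (1 - y) / (2 - p)).
    { unfold Gfp. fold cG. fold y. rewrite Rpower_1_base. field. lra. }
    rewrite EG.
    assert (Erate : rate T sigma gamma N n = Rpower (mesh_tau T gamma N) p).
    { unfold rate. cbv zeta. fold p. destruct (Req_EM_T gamma (2 / sigma)) as [E|E].
      - exfalso. unfold p in Hlt. rewrite E in Hlt. field_simplify in Hlt; lra.
      - rewrite Rmin_left by lra. rewrite Rmax_left.
        rewrite Rpower_O by (apply mesh_pos; lia). ring.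
        replace (sigma - 2 / gamma) with ((p - 2) / gamma) by (unfold p; field; lra).
        apply Rmult_le_0_r. lra. left; apply Rinv_0_lt_compat; lra. }
    rewrite Erate.
    set (Tp := Rpower (mesh_tau T gamma N) p).
    assert (HTp : 0 < Tp) by apply Rpower_pos.
    rewrite (Rmult_comm _ Tp). apply Rmult_le_compat_l. lra.
    assert (cB' * (cG * (1 - y) / (2 - p)) <= cB' * (cG / (2 - p))).
    { apply Rmult_le_compat_l. auto. unfold Rdiv. apply Rmult_le_compat_r. left; apply Rinv_0_lt_compat; lra. nra. }
    assert (cA' * k2 * y <= cA' * k2) by (assert (0 <= cA' * k2) by nra; nra).
    lra.
  -
    exists (2 * c0' + 2 * cB' + cA' * k2 + 1).
    split. { assert (0 <= cA' * k2) by nra. lra. }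
    intros N uh HN H0 Hlin Hint n Hn.
    assert (HG1 : forall m, (2 <= m)%nat -> ln (INR (m - 1)) <= ln (INR m)).
    { intros m Hm. assert (X := ln_incr m Hm). assert (0 < Rpower (INR m) (2 - 3)) by apply Rpower_pos. lra. }
    assert (HG2 : forall m, (3 <= m)%nat -> Rpower (INR m) (gamma * sigma - 3) <= ln (INR m) - ln (INR (m - 1))).
    { intros m Hm. rewrite Heq. apply ln_incr. lia. }
    destruct (KEY ln HG1 HG2 N uh HN H0 Hlin Hint n Hn) as [K1 K2].
    split; [exact K1|]. eapply Rbar_le_trans; [exact K2|]. simpl.
    assert (Hn1 : 1 <= INR n) by (replace 1 with (INR 1) by reflexivity; apply le_INR; lia).
    rewrite ln_1, Rminus_0_r. rewrite Heq. rewrite Rminus_diag. rewrite Rpower_O by lra. rewrite Rmult_1_r.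
    set (tau := mesh_tau T gamma N).
    assert (Htau : 0 < tau) by (apply mesh_tau_pos; auto).
    assert (L0 : 0 <= ln (INR n)) by (rewrite <- ln_1; apply ln_mono; lra).
    assert (Erate : rate T sigma gamma N n = tau ^ 2 * (1 + gamma * ln (INR n))).
    { unfold rate. cbv zeta. destruct (Req_EM_T gamma (2 / sigma)) as [E|E].
      - fold tau. f_equal. f_equal.
        rewrite !mesh_eq by lia. fold tau. simpl (INR 1). rewrite Rmult_1_l.
        rewrite Rpower_mult_base by lra. unfold Rdiv. rewrite Rmult_assoc, Rinv_r.
        rewrite Rmult_1_r, ln_Rpower. reflexivity.
        apply Rgt_not_eq, Rpower_pos.
      - exfalso. apply E. field_simplify_eq; lra. }
    rewrite Erate. rewrite Rpower_2 by auto.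
    assert (0 < tau ^ 2) by (apply pow_lt; auto).
    replace ((2 * c0' + 2 * cB' + cA' * k2 + 1) * (tau ^ 2 * (1 + gamma * ln (INR n))))
      with (tau ^ 2 * ((2 * c0' + 2 * cB' + cA' * k2 + 1) * (1 + gamma * ln (INR n)))) by ring.
    apply Rmult_le_compat_l. lra.
    assert (ln (INR n) <= gamma * ln (INR n)) by nra.
    assert (0 <= cA' * k2) by nra.
    nra.
  -
    set (p := gamma * sigma) in *.
    set (cG := Rpower 2 (Rabs (p - 3))).
    assert (HcG : 0 < cG) by apply Rpower_pos.
    exists (2 * c0' + 2 * cB' * (cG / (p - 2)) + cA' * k2 + 1).
    assert (0 <= cG / (p - 2)) by (apply Rdiv_le_0_compat; lra).
    split. { assert (0 <= 2 * cB' * (cG / (p - 2))) by (apply Rmult_le_pos; lra). nra. }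
    intros N uh HN H0 Hlin Hint n Hn.
    assert (HG1 : forall m, (2 <= m)%nat -> Gfp p (INR (m - 1)) <= Gfp p (INR m)).
    { intros m Hm. assert (X := Gfp_incr p m ltac:(lra) Hm). assert (0 < Rpower (INR m) (p - 3)) by apply Rpower_pos. lra. }
    assert (HG2 : forall m, (3 <= m)%nat -> Rpower (INR m) (p - 3) <= Gfp p (INR m) - Gfp p (INR (m - 1))).
    { intros m Hm. apply Gfp_incr. lra. lia. }
    destruct (KEY (Gfp p) HG1 HG2 N uh HN H0 Hlin Hint n Hn) as [K1 K2].
    split; [exact K1|]. eapply Rbar_le_trans; [exact K2|]. simpl.
    assert (Hn1 : 1 <= INR n) by (replace 1 with (INR 1) by reflexivity; apply le_INR; lia).
    set (y := Rpower (INR n) (p - 2)).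
    assert (Hy1 : 1 <= y) by (apply Rpower_ge_one; lra).
    assert (EG : Gfp p (INR n) - Gfp p 1 <= cG / (p - 2) * y).
    { unfold Gfp. fold cG. fold y. rewrite Rpower_1_base.
      assert (0 < cG * 1 / (p - 2)) by (apply Rdiv_lt_0_compat; lra).
      replace (cG * y / (p - 2)) with (cG / (p - 2) * y) by (field; lra). lra. }
    set (tau := mesh_tau T gamma N).
    assert (Htau : 0 < tau) by (apply mesh_tau_pos; auto).
    assert (Erate : rate T sigma gamma N n = y * Rpower tau p).
    { unfold rate. cbv zeta. fold p. destruct (Req_EM_T gamma (2 / sigma)) as [E|E].
      - exfalso. unfold p in Hgt. rewrite E in Hgt. field_simplify in Hgt; lra.
      - fold tau. rewrite Rmin_right by lra. rewrite Rmax_right.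
        2: { replace (sigma - 2 / gamma) with ((p - 2) / gamma) by (unfold p; field; lra).
             apply Rdiv_le_0_compat; lra. }
        rewrite mesh_eq by lia. fold tau. rewrite Rpower_Rpower.
        replace (gamma * (sigma - 2 / gamma)) with (p - 2) by (unfold p; field; lra).
        rewrite Rpower_mult_base by (try apply lt_0_INR; lia || lra). fold y.
        replace (Rpower tau p) with (Rpower tau (2 + (p - 2))) by (f_equal; ring).
        rewrite Rpower_plus'. ring. }
    rewrite Erate.
    set (Tp := Rpower tau p).
    assert (HTp : 0 < Tp) by apply Rpower_pos.
    replace ((2 * c0' + 2 * cB' * (cG / (p - 2)) + cA' * k2 + 1) * (y * Tp))
      with (Tp * ((2 * c0' + 2 * cB' * (cG / (p - 2)) + cA' * k2 + 1) * y)) by ring.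
    apply Rmult_le_compat_l. lra.
    assert (2 * cB' * (Gfp p (INR n) - Gfp p 1) <= 2 * cB' * (cG / (p - 2) * y)) by (apply Rmult_le_compat_l; lra).
    assert (2 * c0' <= 2 * c0' * y) by nra.
    assert (0 <= cA' * k2) by nra.
    nra.
Qed.
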